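(* For every $k\in\{2,3,\dots\}\cup\{\infty\}$, the map $\overline{T_1}:\overline{\Omega}_k\to\overline{\Omega}_k$, $\overline{T_1}(\overline\gamma)=\overline{T_1(\gamma)}$ where $T_1(\gamma)(t)=\gamma(t+1)$, is well defined and is a homeomorphism of the metric space $(\overline{\Omega}_k,\rho_k)$.
   Context: PSVF conventions: switching manifold $\Sigma=\{y=0\}$; a PSVF $Z=(X,Y)$ uses $X$ on $\{y\ge0\}$, $Y$ on $\{y\le0\}$; trajectories follow the Filippov convention (off $\Sigma$ follow $X$ or $Y$; at crossing points, where the second components of $X$ and $Y$ have the same nonzero sign, pass through; at a regular tangency, i.e. a point of $\Sigma$ where a field is tangent to $\Sigma$ and which is not an invisible tangency of both fields, continue backward and forward along any of the flows of $X$, $Y$ or the sliding field); a global trajectory is a map $\gamma:\mathbb{R}\to\mathbb{R}^2$ which is a bi-infinite orientation-preserving concatenation of such local trajectories on intervals $[t_i,t_{i+1}]$ with $t_i\to\pm\infty$. Finite $k\ge2$: $P_k(x)=-\left(x+\frac{k-1}{2}\right)\left(x-\frac{k-1}{2}\right)\prod_{i=1}^{k-1}\left(x-\left(i-\frac k2\right)\right)^2$, $r_0=\frac{1-k}{2}$, $r_1=\frac{k-1}{2}$, $p_j=j-\frac k2$ ($j=1,\dots,k-1$), $Z_k$: $(1,P_k'(x))$ on $y\ge0$, $(-1,P_k'(x))$ on $y\le0$; $\Lambda_k=\{(x,\pm P_k(x)):r_0\le x\le r_1\}$; arcs $I_0=\{(x,\pm P_k(x)):r_0\le x<p_1\}$,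 $I_{2j-1}=\{(x,P_k(x)):p_j<x<p_{j+1}\}$, $I_{2j}=\{(x,-P_k(x)):p_j<x<p_{j+1}\}$ ($j=1,\dots,k-2$), $I_{2k-3}=\{(x,\pm P_k(x)):p_{k-1}<x\le r_1\}$. Case $k=\infty$: $p_j=j$ ($j\in\mathbb{Z}$), $Z_\infty$: $(1,2\sin(2\pi x))$ on $y\ge0$, $(-1,2\sin(2\pi x))$ on $y\le0$; $P_\infty(x)=\frac{1-\cos(2\pi x)}{\pi}$, $\Lambda_\infty=\{(x,\pm P_\infty(x)):x\in\mathbb{R}\}$; arcs $I_{2j}=\{(x,P_\infty(x)):j<x<j+1\}$, $I_{2j+1}=\{(x,-P_\infty(x)):j<x<j+1\}$. In both cases: $\Omega_k$ is the set of global trajectories $\gamma$ of $Z_k$ with $\gamma(0)\in\Lambda_k$; the itinerary $s(\gamma)_j=n$ if $\gamma(j)\in I_n$ and $s(\gamma)_j=m$ if $\gamma(j)=(p_l,0)$ for some $l$ and $\gamma(j+\frac12)\in I_m$; $\gamma_1\sim\gamma_2$ iff $s(\gamma_1)=s(\gamma_2)$, $\overline\Omega_k=\Omega_k/\sim$. Each class has a representative $\gamma^*$ with $\gamma^*(0)\in\{(p_l,0)\}$; $\rho_k(\overline\gamma_1,\overline\gamma_2)=\sum_{i\in\mathbb{Z}}2^{-|i|}d_H(\gamma_1^*([i,i+1]),\gamma_2^*([i,i+1]))$, $d_H$ the Hausdorff distance, $\gamma_i^*$ such representatives. *)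

(* Defs.v *)
From Stdlib Require Import Reals Lra Lia ZArith ClassicalEpsilon.
From Coquelicot Require Import Coquelicot.
Open Scope R_scope.

Definition pt := (R * R)%type.

Record PSVF := mkPSVF { FX : pt -> pt ; FY : pt -> pt }.

Definition onSigma (q : pt) : Prop := snd q = 0.

Definition dx2 (F : pt -> pt) (q : pt) : R := Derive (fun x => snd (F (x, snd q))) (fst q).
Definition dy2 (F : pt -> pt) (q : pt) : R := Derive (fun y => snd (F (fst q, y))) (snd q).
(* second Lie derivative of h(x,y)=y along F *)
Definition lie2 (F : pt -> pt) (q : pt) : R :=
  fst (F q) * dx2 F q + snd (F q) * dy2 F q.

(* X acts on {y >= 0}: invisible fold when X h = 0, X^2 h < 0 *)
Definition invisible_X (Z : PSVF) (q : pt) : Prop :=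
  onSigma q /\ snd (FX Z q) = 0 /\ lie2 (FX Z) q < 0.
(* Y acts on {y <= 0}: invisible fold when Y h = 0, Y^2 h > 0 *)
Definition invisible_Y (Z : PSVF) (q : pt) : Prop :=
  onSigma q /\ snd (FY Z q) = 0 /\ lie2 (FY Z) q > 0.

Definition crossing (Z : PSVF) (q : pt) : Prop :=
  onSigma q /\ snd (FX Z q) * snd (FY Z q) > 0.

Definition sliding (Z : PSVF) (q : pt) : Prop :=
  onSigma q /\ snd (FX Z q) * snd (FY Z q) < 0.

Definition regular_tangency (Z : PSVF) (q : pt) : Prop :=
  onSigma q /\ (snd (FX Z q) = 0 \/ snd (FY Z q) = 0) /\
  ~ (invisible_X Z q /\ invisible_Y Z q).

(* Filippov sliding vector field (Y2 X - X2 Y)/(Y2 - X2) *)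
Definition sliding_field (Z : PSVF) (q : pt) : pt :=
  let X := FX Z q in let Y := FY Z q in
  ((snd Y * fst X - snd X * fst Y) / (snd Y - snd X),
   (snd Y * snd X - snd X * snd Y) / (snd Y - snd X)).

Definition integral_curve (F : pt -> pt) (g : R -> pt) (a b : R) : Prop :=
  forall t, a < t < b ->
    is_derive (fun s => fst (g s)) t (fst (F (g t))) /\
    is_derive (fun s => snd (g s)) t (snd (F (g t))).

(* local trajectory on [a,b] (g is globally continuous, see below) *)
Definition local_piece (Z : PSVF) (g : R -> pt) (a b : R) : Prop :=
  (integral_curve (FX Z) g a b /\ forall t, a <= t <= b -> 0 <= snd (g t)) \/
  (integral_curve (FY Z) g a b /\ forall t, a <= t <= b -> snd (g t) <= 0) \/
  (integral_curve (sliding_field Z) g a b /\ forall t, a <= t <= b -> sliding Z (g t)).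

Definition junction_ok (Z : PSVF) (q : pt) : Prop :=
  onSigma q -> crossing Z q \/ regular_tangency Z q \/ sliding Z q.

Definition global_trajectory (ZZ : PSVF) (g : R -> pt) : Prop :=
  (forall t, continuous (fun s => fst (g s)) t /\ continuous (fun s => snd (g s)) t) /\
  exists tt : Z -> R,
    (forall i, tt i < tt (Z.succ i)) /\
    (forall M, exists i, M < tt i) /\
    (forall M, exists i, tt i < M) /\
    (forall i, local_piece ZZ g (tt i) (tt (Z.succ i))) /\
    (forall i, junction_ok ZZ (g (tt i))).

(** * The family Z_k; k = Some n (n >= 2) is finite k, k = None is k = infinity *)
Definition valid_k (k : option nat) : Prop :=
  match k with Some n => (2 <= n)%nat | None => True end.

Fixpoint prodR (n : nat) (g : nat -> R) : R :=
  match n with O => 1 | S m => prodR m g * g (S m) end.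

Definition pfin (n : nat) (j : nat) : R := INR j - INR n / 2.
Definition r0 (n : nat) : R := (1 - INR n) / 2.
Definition r1 (n : nat) : R := (INR n - 1) / 2.

Definition Pfin (n : nat) (x : R) : R :=
  - ((x + (INR n - 1) / 2) * (x - (INR n - 1) / 2)) *
  prodR (n - 1) (fun i => (x - pfin n i) ^ 2).

Definition Pinf (x : R) : R := (1 - cos (2 * PI * x)) / PI.

Definition Pk (k : option nat) (x : R) : R :=
  match k with Some n => Pfin n x | None => Pinf x end.

Definition fk (k : option nat) (x : R) : R :=
  match k with
  | Some n => Derive (Pfin n) x
  | None => 2 * sin (2 * PI * x)
  end.

Definition Zk (k : option nat) : PSVF :=
  mkPSVF (fun q => (1, fk k (fst q))) (fun q => (-1, fk k (fst q))).

Definition on_graph (k : option nat) (q : pt) : Prop :=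
  snd q = Pk k (fst q) \/ snd q = - Pk k (fst q).

Definition Lambda (k : option nat) (q : pt) : Prop :=
  match k with
  | Some n => r0 n <= fst q <= r1 n /\ on_graph k q
  | None => on_graph k q
  end.

Definition arc (k : option nat) (m : Z) (q : pt) : Prop :=
  let x := fst q in let y := snd q in
  match k with
  | Some n =>
      (m = 0%Z /\ r0 n <= x < pfin n 1 /\ on_graph k q) \/
      (m = (2 * Z.of_nat n - 3)%Z /\ pfin n (n - 1) < x <= r1 n /\ on_graph k q) \/
      (exists j : nat, (1 <= j <= n - 2)%nat /\ pfin n j < x < pfin n (S j) /\
         ((m = (2 * Z.of_nat j - 1)%Z /\ y = Pfin n x) \/
          (m = (2 * Z.of_nat j)%Z /\ y = - Pfin n x)))
  | None =>
      exists j : Z, IZR j < x < IZR j + 1 /\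
        ((m = (2 * j)%Z /\ y = Pinf x) \/ (m = (2 * j + 1)%Z /\ y = - Pinf x))
  end.

Definition pseudo (k : option nat) (q : pt) : Prop :=
  match k with
  | Some n => exists l : nat, (1 <= l <= n - 1)%nat /\ q = (pfin n l, 0)
  | None => exists l : Z, q = (IZR l, 0)
  end.

Definition Omega (k : option nat) (g : R -> pt) : Prop :=
  global_trajectory (Zk k) g /\ Lambda k (g 0).

(* "s(g)_j = m", as a relation *)
Definition itin (k : option nat) (g : R -> pt) (j : Z) (m : Z) : Prop :=
  arc k m (g (IZR j)) \/ (pseudo k (g (IZR j)) /\ arc k m (g (IZR j + / 2))).

Definition sim (k : option nat) (g1 g2 : R -> pt) : Prop :=
  forall j m, itin k g1 j m <-> itin k g2 j m.

Definition T1 (g : R -> pt) : R -> pt := fun t => g (t + 1).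

Definition euclid (a b : pt) : R :=
  sqrt ((fst a - fst b) ^ 2 + (snd a - snd b) ^ 2).

Definition dist_to_set (a : pt) (B : pt -> Prop) : R :=
  real (Glb_Rbar (fun r => exists b, B b /\ r = euclid a b)).

Definition hausdorff (A B : pt -> Prop) : R :=
  Rmax (real (Lub_Rbar (fun r => exists a, A a /\ r = dist_to_set a B)))
       (real (Lub_Rbar (fun r => exists b, B b /\ r = dist_to_set b A))).

Definition image_on (g : R -> pt) (a b : R) : pt -> Prop :=
  fun q => exists t, a <= t <= b /\ q = g t.

Definition rep (k : option nat) (g : R -> pt) : R -> pt :=
  epsilon (inhabits g) (fun h => Omega k h /\ sim k g h /\ pseudo k (h 0)).

Definition rho_term (k : option nat) (g1 g2 : R -> pt) (i : Z) : R :=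
  (/ 2) ^ Z.abs_nat i *
  hausdorff (image_on (rep k g1) (IZR i) (IZR i + 1))
            (image_on (rep k g2) (IZR i) (IZR i + 1)).

(* sum over i in Z *)
Definition rho (k : option nat) (g1 g2 : R -> pt) : R :=
  rho_term k g1 g2 0 +
  Series (fun n => rho_term k g1 g2 (Z.of_nat (S n)) + rho_term k g1 g2 (- Z.of_nat (S n))).

(* Main.v *)
Require Import Defs.
From Stdlib Require Import Reals ZArith.
From Coquelicot Require Import Coquelicot.
From Stdlib Require Import Lra Lia ClassicalEpsilon FunctionalExtensionality PropExtensionality.
Open Scope R_scope.

Lemma prodR_ex_derive m (c : nat -> R) x :
  ex_derive (fun x => prodR m (fun i => (x - c i)^2)) x.
Proof.
  induction m; simpl.
  - apply ex_derive_const.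
  - apply (ex_derive_mult (fun x => prodR m (fun i => (x - c i)^2)) (fun x => (x - c (S m)) * ((x - c (S m)) * 1))); auto.
    auto_derive; auto.
Qed.

Lemma Pfin_ex_derive n x : ex_derive (Pfin n) x.
Proof.
  unfold Pfin.
  apply (ex_derive_mult (fun x => - ((x + (INR n - 1) / 2) * (x - (INR n - 1) / 2)))
     (fun x => prodR (n - 1) (fun i => (x - pfin n i) ^ 2))).
  - auto_derive; auto.
  - apply prodR_ex_derive.
Qed.

Lemma Pk_deriv k x : is_derive (Pk k) x (fk k x).
Proof.
  destruct k as [n|]; simpl.
  - apply Derive_correct, Pfin_ex_derive.
  - change (is_derive (fun x => (1 - cos (2*PI*x))/PI) x (2 * sin (2*PI*x))).
    assert (PI <> 0) by (generalize PI_RGT_0; lra).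
    auto_derive; auto. field; auto.
Qed.

Lemma Pk_cont k x : continuous (Pk k) x.
Proof. apply (ex_derive_continuous (Pk k)). eexists. apply Pk_deriv. Qed.

Lemma prodR_nonneg m g : (forall i, 0 <= g i) -> 0 <= prodR m g.
Proof. intros H; induction m; simpl; [lra|]. apply Rmult_le_pos; auto. Qed.

Lemma prodR_pos m g : (forall i, (1 <= i <= m)%nat -> 0 < g i) -> 0 < prodR m g.
Proof. intros H; induction m; simpl; [lra|]. apply Rmult_lt_0_compat; [apply IHm; intros; apply H; lia| apply H; lia]. Qed.

Lemma prodR_zero m g : prodR m g = 0 -> exists i, (1 <= i <= m)%nat /\ g i = 0.
Proof.
  induction m; simpl; intros H; [lra|].
  destruct (Rmult_integral _ _ H) as [H1|H1].
  - destruct (IHm H1) as [i [Hi Hg]]. exists i; split; auto; lia.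
  - exists (S m); split; auto; lia.
Qed.

Lemma prodR_zero_at m g i : (1 <= i <= m)%nat -> g i = 0 -> prodR m g = 0.
Proof.
  induction m; simpl; intros Hi Hg; [lia|].
  destruct (Nat.eq_dec i (S m)) as [->|Hne]; [rewrite Hg; ring|].
  rewrite IHm; [ring|lia|auto].
Qed.

Lemma prodR_le m g C : (forall i, (1 <= i <= m)%nat -> 0 <= g i <= C) -> prodR m g <= C ^ m.
Proof.
  induction m; simpl; intros H; [lra|].
  assert (0 <= C) by (destruct (H (S m)); [lia|lra]).
  assert (0 <= prodR m g).
  { clear IHm. induction m; simpl; [lra|]. apply Rmult_le_pos; [apply IHm; intros; apply H; lia| apply H; lia]. }
  destruct (H (S m)) as [Ha Hb]; [lia|].
  rewrite (Rmult_comm C). apply Rmult_le_compat; auto. apply IHm; intros; apply H; lia.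
Qed.

Lemma r0_eq n : r0 n = - r1 n.
Proof. unfold r0, r1; lra. Qed.

Lemma INR_pred n : (1 <= n)%nat -> INR (n - 1) = INR n - 1.
Proof. intros; rewrite minus_INR; simpl; auto; lra. Qed.

Lemma pfin_S n l : pfin n (S l) = pfin n l + 1.
Proof. unfold pfin; rewrite S_INR; ring. Qed.

Lemma pfin_range n l : (1 <= l <= n - 1)%nat -> r0 n + /2 <= pfin n l <= r1 n - /2.
Proof.
  intros H. unfold pfin, r0, r1.
  assert (1 <= INR l) by (replace 1 with (INR 1) by reflexivity; apply le_INR; lia).
  assert (INR l <= INR n - 1) by (rewrite <- INR_pred by lia; apply le_INR; lia).
  lra.
Qed.

Lemma nat_between l m : INR l < INR m -> INR m < INR l + 1 -> False.
Proof.
  intros H1 H2. apply INR_lt in H1. rewrite <- S_INR in H2. apply INR_lt in H2. lia.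
Qed.

Lemma pfin_lt n a b : pfin n a < pfin n b -> (a < b)%nat.
Proof. unfold pfin; intros; apply INR_lt; lra. Qed.
Lemma pfin_le n a b : (a <= b)%nat -> pfin n a <= pfin n b.
Proof. unfold pfin; intros; apply le_INR in H; lra. Qed.

Lemma Pfin_first n x : Pfin n x = - ((x - r0 n) * (x - r1 n)) * prodR (n - 1) (fun i => (x - pfin n i) ^ 2).
Proof. unfold Pfin, r0, r1. f_equal. f_equal. f_equal. lra. Qed.

Lemma Pfin_nonneg n x : r0 n <= x <= r1 n -> 0 <= Pfin n x.
Proof.
  intros H. rewrite Pfin_first. apply Rmult_le_pos.
  - assert (0 <= x - r0 n) by lra. assert (x - r1 n <= 0) by lra. nra.
  - apply prodR_nonneg; intros; apply pow2_ge_0.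
Qed.

Lemma Pfin_neg n x : (2 <= n)%nat -> x < r0 n \/ r1 n < x -> Pfin n x < 0.
Proof.
  intros Hn H. rewrite Pfin_first.
  assert (r0 n < r1 n) by (unfold r0, r1; assert (2 <= INR n) by (replace 2 with (INR 2) by reflexivity; apply le_INR; lia); lra).
  assert (0 < prodR (n - 1) (fun i => (x - pfin n i) ^ 2)).
  { apply prodR_pos. intros i Hi. pose proof (pfin_range n i Hi).
    assert (x - pfin n i <> 0) by lra.
    replace ((x - pfin n i)^2) with (Rsqr (x - pfin n i)) by (unfold Rsqr; ring). apply Rsqr_pos_lt; lra. }
  assert (0 < (x - r0 n) * (x - r1 n)) by (destruct H; nra).
  nra.
Qed.

Lemma Pfin_zero n x : r0 n <= x <= r1 n -> Pfin n x = 0 ->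
  x = r0 n \/ x = r1 n \/ exists l, (1 <= l <= n - 1)%nat /\ x = pfin n l.
Proof.
  intros Hx H. rewrite Pfin_first in H.
  destruct (Rmult_integral _ _ H) as [H1|H1].
  - assert ((x - r0 n) * (x - r1 n) = 0) by lra.
    destruct (Rmult_integral _ _ H0); [left; lra| right; left; lra].
  - right; right. destruct (prodR_zero _ _ H1) as [i [Hi Hg]]. exists i; split; auto.
    simpl in Hg. nra.
Qed.

Lemma Pfin_at_pfin n l : (1 <= l <= n - 1)%nat -> Pfin n (pfin n l) = 0.
Proof.
  intros H. rewrite Pfin_first. rewrite (prodR_zero_at _ _ l); [ring|auto|]. simpl; ring.
Qed.
Lemma Pfin_r0 n : Pfin n (r0 n) = 0.
Proof. rewrite Pfin_first. ring. Qed.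
Lemma Pfin_r1 n : Pfin n (r1 n) = 0.
Proof. rewrite Pfin_first. ring. Qed.

Lemma Pfin_nz n x : (2 <= n)%nat -> x <> r0 n -> x <> r1 n ->
  (forall l, (1 <= l <= n - 1)%nat -> x <> pfin n l) -> Pfin n x <> 0.
Proof.
  intros Hn H0 H1 H2 H.
  destruct (Rle_dec (r0 n) x) as [Ha|Ha]; destruct (Rle_dec x (r1 n)) as [Hb|Hb].
  - destruct (Pfin_zero n x (conj Ha Hb) H) as [?|[?|[l [Hl ->]]]]; auto. apply (H2 l); auto.
  - pose proof (Pfin_neg n x Hn); lra.
  - pose proof (Pfin_neg n x Hn); lra.
  - pose proof (Pfin_neg n x Hn); lra.
Qed.

Lemma Pinf_nonneg x : 0 <= Pinf x.
Proof. unfold Pinf. pose proof (COS_bound (2*PI*x)). pose proof PI_RGT_0.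
  apply Rmult_le_pos; [lra| left; apply Rinv_0_lt_compat; lra]. Qed.

Lemma Pinf_le1 x : Pinf x <= 1.
Proof. unfold Pinf. pose proof (COS_bound (2*PI*x)). pose proof PI2_1.
  apply Rmult_le_reg_r with PI; [lra|]. unfold Rdiv. rewrite Rmult_assoc, Rinv_l; lra. Qed.

Lemma Pinf_zero x : Pinf x = 0 -> exists l, x = IZR l.
Proof.
  unfold Pinf; intros H. pose proof PI_RGT_0.
  assert (cos (2 * PI * x) = 1).
  { assert (1 - cos (2*PI*x) = 0); [|lra].
    apply (Rmult_eq_reg_r (/ PI)); [rewrite Rmult_0_l; exact H| apply Rinv_neq_0_compat; lra]. }
  replace (2 * PI * x) with (2 * (PI * x)) in H1 by ring.
  rewrite cos_2a_sin in H1. assert (sin (PI * x) = 0) by nra.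
  destruct (sin_eq_0_0 _ H2) as [l Hl]. exists l.
  apply (Rmult_eq_reg_l PI); [|lra]. rewrite Hl; ring.
Qed.

Lemma Pinf_int l : Pinf (IZR l) = 0.
Proof.
  unfold Pinf. replace (2 * PI * IZR l) with (2 * (IZR l * PI)) by ring.
  rewrite cos_2a_sin, sin_eq_0_1 by (exists l; auto). unfold Rdiv; ring.
Qed.

Lemma Z_between l m : IZR l < IZR m -> IZR m < IZR l + 1 -> False.
Proof.
  intros H1 H2. apply lt_IZR in H1. rewrite <- plus_IZR in H2. apply lt_IZR in H2. lia.
Qed.

Lemma Lambda_iff k (hk : valid_k k) q : Lambda k q <-> on_graph k q /\ 0 <= Pk k (fst q).
Proof.
  destruct k as [n|]; simpl in *.
  - split.
    + intros [H1 H2]; split; auto. apply Pfin_nonneg; auto.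
    + intros [H1 H2]; split; auto.
      destruct (Rle_dec (r0 n) (fst q)); destruct (Rle_dec (fst q) (r1 n)); try (split; auto; fail);
      pose proof (Pfin_neg n (fst q) hk); lra.
  - split; [intros H; split; auto; apply Pinf_nonneg| tauto].
Qed.

Lemma const_on (f : R -> R) a b : (forall t, a < t < b -> is_derive f t 0) ->
  (forall t, continuous f t) -> forall t, a <= t <= b -> f t = f a.
Proof.
  intros Hd Hc t Ht.
  destruct (Req_dec t a) as [->|Hne]; auto.
  destruct (MVT_gen f a t (fun _ => 0)) as [c [Hc1 Hc2]].
  - intros x Hx. rewrite Rmin_left in Hx by lra. rewrite Rmax_right in Hx by lra. apply Hd; lra.
  - intros x _. apply continuity_pt_filterlim. apply Hc.
  - lra.
Qed.

Lemma is_derive_eq (f : R -> R) x l l' : is_derive f x l -> l = l' -> is_derive f x l'.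
Proof. intros H ->; auto. Qed.

Definition ContG (g : R -> pt) := forall t, continuous (fun s => fst (g s)) t /\ continuous (fun s => snd (g s)) t.

Lemma cont_Px k g (Hc : ContG g) t : continuous (fun s => Pk k (fst (g s))) t.
Proof. apply (continuous_comp (fun s => fst (g s)) (Pk k)). apply Hc. apply Pk_cont. Qed.

Lemma piece_X k g (Hc : ContG g) a b : integral_curve (FX (Zk k)) g a b -> forall t, a <= t <= b ->
  fst (g t) = fst (g a) + (t - a) /\ snd (g t) = snd (g a) + (Pk k (fst (g t)) - Pk k (fst (g a))).
Proof.
  intros Hi t Ht.
  assert (Hx : forall t, a <= t <= b -> fst (g t) - t = fst (g a) - a).
  { apply (const_on (fun t => fst (g t) - t)).
    - intros u Hu. destruct (Hi u Hu) as [H1 _]. simpl in H1.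
      eapply is_derive_eq. apply (is_derive_minus _ _ u _ _ H1 (is_derive_id u)).
      unfold minus, plus, opp, one; simpl; ring.
    - intros u. apply (continuous_minus (fun s => fst (g s)) (fun s => s)); [apply Hc| apply continuous_id]. }
  assert (Hy : forall t, a <= t <= b -> snd (g t) - Pk k (fst (g t)) = snd (g a) - Pk k (fst (g a))).
  { apply (const_on (fun t => snd (g t) - Pk k (fst (g t)))).
    - intros u Hu. destruct (Hi u Hu) as [H1 H2].
      assert (H3 : is_derive (fun s => Pk k (fst (g s))) u (scal (fst (FX (Zk k) (g u))) (fk k (fst (g u))))).
      { apply (is_derive_comp (Pk k) (fun s => fst (g s))); [apply Pk_deriv| exact H1]. }
      eapply is_derive_eq. apply (is_derive_minus _ _ u _ _ H2 H3).
      unfold minus, plus, opp, scal; simpl; unfold mult; simpl; ring.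
    - intros u. apply (continuous_minus (fun s => snd (g s)) (fun s => Pk k (fst (g s)))); [apply Hc| apply (cont_Px k g Hc)]. }
  split; [specialize (Hx t Ht)| specialize (Hy t Ht)]; lra.
Qed.

Lemma piece_Y k g (Hc : ContG g) a b : integral_curve (FY (Zk k)) g a b -> forall t, a <= t <= b ->
  fst (g t) = fst (g a) - (t - a) /\ snd (g t) = snd (g a) - (Pk k (fst (g t)) - Pk k (fst (g a))).
Proof.
  intros Hi t Ht.
  assert (Hx : forall t, a <= t <= b -> fst (g t) + t = fst (g a) + a).
  { apply (const_on (fun t => fst (g t) + t)).
    - intros u Hu. destruct (Hi u Hu) as [H1 _]. simpl in H1.
      eapply is_derive_eq. apply (is_derive_plus _ _ u _ _ H1 (is_derive_id u)).
      unfold plus, one; simpl; ring.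
    - intros u. apply (continuous_plus (fun s => fst (g s)) (fun s => s)); [apply Hc| apply continuous_id]. }
  assert (Hy : forall t, a <= t <= b -> snd (g t) + Pk k (fst (g t)) = snd (g a) + Pk k (fst (g a))).
  { apply (const_on (fun t => snd (g t) + Pk k (fst (g t)))).
    - intros u Hu. destruct (Hi u Hu) as [H1 H2].
      assert (H3 : is_derive (fun s => Pk k (fst (g s))) u (scal (fst (FY (Zk k) (g u))) (fk k (fst (g u))))).
      { apply (is_derive_comp (Pk k) (fun s => fst (g s))); [apply Pk_deriv| exact H1]. }
      eapply is_derive_eq. apply (is_derive_plus _ _ u _ _ H2 H3).
      unfold plus, scal; simpl; unfold mult; simpl; ring.
    - intros u. apply (continuous_plus (fun s => snd (g s)) (fun s => Pk k (fst (g s)))); [apply Hc| apply (cont_Px k g Hc)]. }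
  split; [specialize (Hx t Ht)| specialize (Hy t Ht)]; lra.
Qed.

Lemma piece_traj k g (Hc : ContG g) (hk : valid_k k) a b : a < b -> local_piece (Zk k) g a b ->
  (exists t0, a <= t0 <= b /\ Lambda k (g t0)) ->
  exists s, (s = 1 \/ s = -1) /\ forall t, a <= t <= b ->
    fst (g t) = fst (g a) + s * (t - a) /\ snd (g t) = s * Pk k (fst (g t)) /\ Lambda k (g t).
Proof.
  intros Hab Hp [t0 [Ht0 HL]].
  rewrite (Lambda_iff k hk) in HL. destruct HL as [Hog HP].
  destruct Hp as [[Hi Hs]|[[Hi Hs]|[Hi Hs]]].
  - exists 1; split; [auto|]. pose proof (piece_X k g Hc a b Hi) as HX.
    assert (HC : snd (g a) - Pk k (fst (g a)) = 0).
    { destruct (HX t0 Ht0) as [_ Hy]. specialize (Hs t0 Ht0).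
      destruct Hog as [Hog|Hog]; unfold on_graph in *; lra. }
    intros t Ht. destruct (HX t Ht) as [Hx Hy]. specialize (Hs t Ht).
    repeat split; [lra|lra|]. apply (Lambda_iff k hk). split; [left; lra| lra].
  - exists (-1); split; [auto|]. pose proof (piece_Y k g Hc a b Hi) as HX.
    assert (HC : snd (g a) + Pk k (fst (g a)) = 0).
    { destruct (HX t0 Ht0) as [_ Hy]. specialize (Hs t0 Ht0).
      destruct Hog as [Hog|Hog]; unfold on_graph in *; lra. }
    intros t Ht. destruct (HX t Ht) as [Hx Hy]. specialize (Hs t Ht).
    repeat split; [lra|lra|]. apply (Lambda_iff k hk). split; [right; lra| lra].
  - exfalso. destruct (Hs a (conj (Rle_refl a) (Rlt_le _ _ Hab))) as [_ Hsl].
    simpl in Hsl. nra.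
Qed.

Lemma tt_mono (tt : Z -> R) : (forall i, tt i < tt (Z.succ i)) -> forall i j, (i < j)%Z -> tt i < tt j.
Proof.
  intros H i j Hij.
  assert (forall m : nat, tt i < tt (i + Z.of_nat (S m))%Z).
  { induction m.
    - replace (i + Z.of_nat 1)%Z with (Z.succ i) by lia. apply H.
    - replace (i + Z.of_nat (S (S m)))%Z with (Z.succ (i + Z.of_nat (S m))) by lia.
      specialize (H (i + Z.of_nat (S m))%Z). lra. }
  replace j with (i + Z.of_nat (S (Z.to_nat (j - i - 1))))%Z by lia. apply H0.
Qed.

Lemma tt_mono_le (tt : Z -> R) : (forall i, tt i < tt (Z.succ i)) -> forall i j, (i <= j)%Z -> tt i <= tt j.
Proof.
  intros H i j Hij. destruct (Z.eq_dec i j) as [->|Hne]; [lra|].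
  left; apply tt_mono; auto; lia.
Qed.

Lemma tt_rev (tt : Z -> R) : (forall i, tt i < tt (Z.succ i)) -> forall i j, tt i < tt j -> (i < j)%Z.
Proof.
  intros H i j Hij. destruct (Z_lt_le_dec i j); auto.
  pose proof (tt_mono_le tt H j i l). lra.
Qed.

Lemma find_piece (tt : Z -> R) : (forall i, tt i < tt (Z.succ i)) ->
  (forall M, exists i, M < tt i) -> (forall M, exists i, tt i < M) ->
  forall t, exists i, tt i <= t < tt (Z.succ i).
Proof.
  intros H Hu Hd t.
  destruct (Hd t) as [i1 Hi1]. destruct (Hu t) as [i2 Hi2].
  assert (Hlt : (i1 < i2)%Z) by (apply (tt_rev tt H); lra).
  assert (forall m i, tt i <= t -> t < tt (i + Z.of_nat m)%Z -> exists j, tt j <= t < tt (Z.succ j)).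
  { induction m; intros i Ha Hb.
    - rewrite Z.add_0_r in Hb; lra.
    - destruct (Rlt_le_dec t (tt (Z.succ i))) as [Hl|Hl]; [exists i; lra|].
      apply (IHm (Z.succ i)); auto. replace (Z.succ i + Z.of_nat m)%Z with (i + Z.of_nat (S m))%Z by lia; auto. }
  apply (H0 (Z.to_nat (i2 - i1)) i1); [lra|]. replace (i1 + Z.of_nat (Z.to_nat (i2 - i1)))%Z with i2 by lia; auto.
Qed.

Definition Traj (k : option nat) (g : R -> pt) : Prop :=
  (forall t, Lambda k (g t)) /\
  exists (tt : Z -> R) (sg : Z -> R),
    (forall i, tt i < tt (Z.succ i)) /\ (forall M, exists i, M < tt i) /\ (forall M, exists i, tt i < M) /\
    (forall i, (sg i = 1 \/ sg i = -1) /\ forall t, tt i <= t <= tt (Z.succ i) ->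
       fst (g t) = fst (g (tt i)) + sg i * (t - tt i) /\ snd (g t) = sg i * Pk k (fst (g t))).

Lemma Omega_Traj k (hk : valid_k k) g : Omega k g -> Traj k g.
Proof.
  intros [[Hc [tt [Hinc [Hu [Hd [Hp _]]]]]] H0].
  set (LP := fun i => forall t, tt i <= t <= tt (Z.succ i) -> Lambda k (g t)).
  assert (Hstep : forall i, (exists t0, tt i <= t0 <= tt (Z.succ i) /\ Lambda k (g t0)) -> LP i).
  { intros i He t Ht. destruct (piece_traj k g Hc hk _ _ (Hinc i) (Hp i) He) as [s [_ Hs]].
    apply (Hs t Ht). }
  destruct (find_piece tt Hinc Hu Hd 0) as [i0 Hi0].
  assert (HL0 : LP i0) by (apply Hstep; exists 0; split; [lra|auto]).
  assert (Hall : forall m : nat, LP (i0 + Z.of_nat m)%Z /\ LP (i0 - Z.of_nat m)%Z).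
  { induction m.
    - rewrite Z.add_0_r, Z.sub_0_r; auto.
    - destruct IHm as [IH1 IH2]. split.
      + apply Hstep. exists (tt (i0 + Z.of_nat (S m)))%Z. split; [pose proof (Hinc (i0 + Z.of_nat (S m))%Z); lra|].
        apply IH1. replace (Z.succ (i0 + Z.of_nat m)) with (i0 + Z.of_nat (S m))%Z by lia.
        pose proof (Hinc (i0 + Z.of_nat m)%Z).
        replace (Z.succ (i0 + Z.of_nat m)) with (i0 + Z.of_nat (S m))%Z in H by lia. lra.
      + apply Hstep. exists (tt (i0 - Z.of_nat m))%Z.
        replace (Z.succ (i0 - Z.of_nat (S m))) with (i0 - Z.of_nat m)%Z by lia.
        split; [pose proof (Hinc (i0 - Z.of_nat (S m))%Z);
          replace (Z.succ (i0 - Z.of_nat (S m))) with (i0 - Z.of_nat m)%Z in H by lia; lra|].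
        apply IH2. pose proof (Hinc (i0 - Z.of_nat m)%Z). lra. }
  assert (HLP : forall i, LP i).
  { intros i. destruct (Z_le_gt_dec i0 i).
    - replace i with (i0 + Z.of_nat (Z.to_nat (i - i0)))%Z by lia. apply Hall.
    - replace i with (i0 - Z.of_nat (Z.to_nat (i0 - i)))%Z by lia. apply Hall. }
  split.
  - intros t. destruct (find_piece tt Hinc Hu Hd t) as [i Hi]. apply (HLP i); lra.
  - set (P := fun i s => (s = 1 \/ s = -1) /\ forall t, tt i <= t <= tt (Z.succ i) ->
       fst (g t) = fst (g (tt i)) + s * (t - tt i) /\ snd (g t) = s * Pk k (fst (g t))).
    assert (HP : forall i, exists s, P i s).
    { intros i. destruct (piece_traj k g Hc hk _ _ (Hinc i) (Hp i)) as [s [Hs1 Hs2]].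
      - exists (tt i). split; [pose proof (Hinc i); lra|]. apply (HLP i). pose proof (Hinc i); lra.
      - exists s. split; auto. intros t Ht; destruct (Hs2 t Ht) as [? [? ?]]; auto. }
    exists tt, (fun i => epsilon (inhabits 0) (P i)).
    split; [auto|split; [auto|split; [auto|]]]. intros j. apply (epsilon_spec _ (P j) (HP j)).
Qed.

Lemma GML k g : Traj k g -> forall c, exists sig, (sig = 1 \/ sig = -1) /\
  forall d, 0 < d -> (forall s, 0 < s < d -> Pk k (fst (g c) + sig * s) <> 0) ->
  forall s, 0 <= s <= d -> fst (g (c + s)) = fst (g c) + sig * s /\
                          snd (g (c + s)) = sig * Pk k (fst (g (c + s))).
Proof.
  intros [HL [tt [sg [Hinc [Hu [Hd Hp]]]]]] c.
  destruct (find_piece tt Hinc Hu Hd c) as [i0 Hi0].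
  exists (sg i0). split; [apply Hp|].
  intros d Hd0 Hnz.
  assert (Hrel : forall i t u, tt i <= t <= tt (Z.succ i) -> tt i <= u <= tt (Z.succ i) ->
            fst (g t) = fst (g u) + sg i * (t - u)).
  { intros i t u Ht Hu'. destruct (proj2 (Hp i) t Ht) as [H1 _]. destruct (proj2 (Hp i) u Hu') as [H2 _].
    rewrite H1, H2; ring. }
  assert (Hclaim : forall m : nat,
    (tt (i0 + Z.of_nat m)%Z < c + d -> sg (i0 + Z.of_nat m)%Z = sg i0) /\
    forall t, c <= t <= Rmin (tt (Z.succ (i0 + Z.of_nat m))) (c + d) ->
      fst (g t) = fst (g c) + sg i0 * (t - c) /\ snd (g t) = sg i0 * Pk k (fst (g t))).
  { induction m.
    - rewrite Z.add_0_r. split; auto. intros t Ht.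
      assert (Ht' : tt i0 <= t <= tt (Z.succ i0)) by (pose proof (Rmin_l (tt (Z.succ i0)) (c + d)); lra).
      split; [apply Hrel; lra| apply (proj2 (Hp i0) t Ht')].
    - destruct IHm as [IH1 IH2].
      set (j := (i0 + Z.of_nat m)%Z) in *.
      replace (i0 + Z.of_nat (S m))%Z with (Z.succ j) by (unfold j; lia).
      assert (Hj1 : c < tt (Z.succ j)).
      { pose proof (tt_mono_le tt Hinc (Z.succ i0) (Z.succ j) ltac:(unfold j; lia)). lra. }
      destruct (Rlt_le_dec (tt (Z.succ j)) (c + d)) as [Hlt|Hge].
      + set (t1 := tt (Z.succ j)) in *.
        assert (Ht1 : fst (g t1) = fst (g c) + sg i0 * (t1 - c) /\ snd (g t1) = sg i0 * Pk k (fst (g t1))).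
        { apply IH2. rewrite Rmin_left by lra. lra. }
        assert (HPnz : Pk k (fst (g t1)) <> 0).
        { destruct Ht1 as [Hx _]. rewrite Hx. apply Hnz. lra. }
        assert (Hsg : sg (Z.succ j) = sg i0).
        { pose proof (Hinc (Z.succ j)).
          destruct (proj2 (Hp (Z.succ j)) t1 ltac:(unfold t1; lra)) as [_ Hy].
          destruct Ht1 as [_ Hy']. apply (Rmult_eq_reg_r (Pk k (fst (g t1)))); auto. lra. }
        split; [auto|]. intros t Ht.
        destruct (Rle_dec t t1) as [Hle|Hgt].
        * apply IH2. rewrite Rmin_left by lra. lra.
        * pose proof (Rmin_l (tt (Z.succ (Z.succ j))) (c + d)).
          assert (Htp : tt (Z.succ j) <= t <= tt (Z.succ (Z.succ j))) by (unfold t1 in *; lra).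
          destruct (proj2 (Hp (Z.succ j)) t Htp) as [_ Hy].
          rewrite Hsg in Hy. split; auto.
          rewrite (Hrel (Z.succ j) t t1 Htp) by (pose proof (Hinc (Z.succ j)); unfold t1; lra).
          rewrite Hsg. destruct Ht1 as [Hx _]; rewrite Hx; ring.
      + split; [intros; lra|]. intros t Ht. apply IH2.
        pose proof (Hinc (Z.succ j)).
        rewrite Rmin_right in Ht by lra. rewrite Rmin_right by lra. lra. }
  destruct (Hu (c + d)) as [i Hi].
  assert (Hii : (i0 < i)%Z) by (apply (tt_rev tt Hinc); lra).
  intros s Hs.
  destruct (Hclaim (Z.to_nat (i - i0 - 1))) as [_ H].
  replace (Z.succ (i0 + Z.of_nat (Z.to_nat (i - i0 - 1)))) with i in H by lia.
  destruct (H (c + s)) as [H1 H2]; [rewrite Rmin_right by lra; lra|].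
  split; auto. rewrite H1; ring.
Qed.

Definition rev (g : R -> pt) : R -> pt := fun t => (fst (g (- t)), - snd (g (- t))).

Lemma Lambda_neg k q : Lambda k q -> Lambda k (fst q, - snd q).
Proof.
  destruct k; simpl; unfold on_graph; simpl; intros H; [destruct H as [H1 H2]; split; auto|]; lra.
Qed.

Lemma Traj_rev k g : Traj k g -> Traj k (rev g).
Proof.
  intros [HL [tt [sg [Hinc [Hu [Hd Hp]]]]]].
  split; [intros t; apply Lambda_neg, HL|].
  exists (fun i => - tt (- i)%Z), (fun i => - sg (Z.pred (- i))).
  split; [|split; [|split]].
  - intros i. pose proof (Hinc (Z.pred (- i))). rewrite Z.succ_pred in H.
    replace (- Z.succ i)%Z with (Z.pred (- i)) by lia. lra.
  - intros M. destruct (Hd (- M)) as [j Hj]. exists (- j)%Z. rewrite Z.opp_involutive. lra.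
  - intros M. destruct (Hu (- M)) as [j Hj]. exists (- j)%Z. rewrite Z.opp_involutive. lra.
  - intros i. set (p := Z.pred (- i)). destruct (Hp p) as [Hs Hf]. split; [destruct Hs; [right|left]; lra|].
    intros t Ht. unfold rev; simpl.
    replace (- Z.succ i)%Z with p in Ht by (unfold p; lia).
    assert (Hsp : Z.succ p = (- i)%Z) by (unfold p; lia).
    rewrite Ropp_involutive.
    destruct (Hf (- t)) as [H1 H2]; [rewrite Hsp; lra|].
    destruct (Hf (tt (- i)%Z)) as [H3 _]; [rewrite Hsp; pose proof (Hinc p); rewrite Hsp in H; lra|].
    split; [rewrite H1, H3; ring| rewrite H2; ring].
Qed.

Definition SegF (n l : nat) (b : bool) (s : R) : pt :=
  if b then
    (if Nat.eqb l (n - 1) then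
       (r1 n - Rabs (s - /2), (if Rle_dec s (/2) then 1 else -1) * Pfin n (r1 n - Rabs (s - /2)))
     else (pfin n l + s, Pfin n (pfin n l + s)))
  else
    (if Nat.eqb l 1 then
       (r0 n + Rabs (s - /2), (if Rle_dec s (/2) then -1 else 1) * Pfin n (r0 n + Rabs (s - /2)))
     else (pfin n l - s, - Pfin n (pfin n l - s))).

Definition AF (n l : nat) (b : bool) : Z :=
  if b then (if Nat.eqb l (n - 1) then (2 * Z.of_nat n - 3)%Z else (2 * Z.of_nat l - 1)%Z)
  else (if Nat.eqb l 1 then 0%Z else (2 * Z.of_nat (l - 1))%Z).

Lemma pfin_last n : (1 <= n)%nat -> pfin n (n - 1) = r1 n - /2.
Proof. intros H; unfold pfin, r1; rewrite INR_pred by auto; field. Qed.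
Lemma pfin_first n : pfin n 1 = r0 n + /2.
Proof. unfold pfin, r0; simpl; field. Qed.
Lemma pfin_pred n l : (1 <= l)%nat -> pfin n (l - 1) = pfin n l - 1.
Proof. intros H; unfold pfin; rewrite INR_pred by auto; ring. Qed.

Lemma r0_lt_r1 n : (2 <= n)%nat -> r0 n + 1 <= r1 n.
Proof. intros H; unfold r0, r1. assert (2 <= INR n) by (replace 2 with (INR 2) by reflexivity; apply le_INR; lia). lra. Qed.

Lemma nz_mid n l x : (2 <= n)%nat -> (1 <= l)%nat -> (S l <= n - 1)%nat ->
  pfin n l < x < pfin n l + 1 -> Pfin n x <> 0.
Proof.
  intros Hn H1 H2 Hx. pose proof (pfin_range n l ltac:(lia)). pose proof (pfin_range n (S l) ltac:(lia)).
  rewrite pfin_S in H0.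
  apply Pfin_nz; auto; try lra.
  intros m Hm E. subst x. unfold pfin in Hx. apply (nat_between l m); lra.
Qed.

Lemma nz_right n x : (2 <= n)%nat -> pfin n (n - 1) < x < r1 n -> Pfin n x <> 0.
Proof.
  intros Hn Hx. pose proof (pfin_range n (n-1) ltac:(lia)).
  apply Pfin_nz; auto; try lra.
  intros m Hm E. subst x. pose proof (pfin_le n m (n-1) ltac:(lia)). lra.
Qed.

Lemma nz_left n x : (2 <= n)%nat -> r0 n < x < pfin n 1 -> Pfin n x <> 0.
Proof.
  intros Hn Hx. pose proof (pfin_range n 1 ltac:(lia)).
  apply Pfin_nz; auto; try lra.
  intros m Hm E. subst x. pose proof (pfin_le n 1 m ltac:(lia)). lra.
Qed.

Lemma Rabs_le_half s : 0 <= s <= 1 -> Rabs (s - /2) <= /2.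
Proof. intros; unfold Rabs; destruct Rcase_abs; lra. Qed.

Lemma pair_eq (q : pt) a b : fst q = a -> snd q = b -> q = (a, b).
Proof. destruct q; simpl; intros -> ->; auto. Qed.

Lemma seg_fin n (hn : (2 <= n)%nat) g : Traj (Some n) g -> forall c l, (1 <= l <= n - 1)%nat ->
  g c = (pfin n l, 0) -> exists b, forall s, 0 <= s <= 1 -> g (c + s) = SegF n l b s.
Proof.
  intros HT c l Hl Hgc.
  pose proof (pfin_range n l Hl) as Hpr. pose proof (r0_lt_r1 n hn) as Hrr.
  assert (Hx0 : fst (g c) = pfin n l) by (rewrite Hgc; auto).
  destruct (GML _ _ HT c) as [sig [[-> | ->] H]].
  - exists true. unfold SegF. destruct (Nat.eqb_spec l (n - 1)) as [El|El].
    + subst l. rewrite pfin_last in * by lia.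
      assert (H1 : forall s, 0 <= s <= /2 -> fst (g (c + s)) = r1 n - /2 + s /\
                   snd (g (c + s)) = Pfin n (fst (g (c + s)))).
      { intros s Hs. destruct (H (/2) ltac:(lra)) with s as [E1 E2]; auto.
        - intros u Hu. rewrite Hx0. apply nz_right; auto. rewrite pfin_last by lia. lra.
        - rewrite Hx0 in E1. split; [lra| rewrite E2; simpl; ring]. }
      set (c' := c + /2).
      assert (Hx1 : fst (g c') = r1 n) by (destruct (H1 (/2) ltac:(lra)) as [E _]; unfold c'; lra).
      destruct (GML _ _ HT c') as [sig' [[-> | ->] H']].
      * exfalso. destruct (H' (/2) ltac:(lra)) with (/4) as [E1 _]; [|lra|].
        { intros u Hu. rewrite Hx1. simpl in *. apply Rlt_not_eq. apply Pfin_neg; auto. lra. }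
        destruct HT as [HL _]. destruct (HL (c' + /4)) as [[_ Hr] _]. lra.
      * assert (H2 : forall s, 0 <= s <= /2 -> fst (g (c' + s)) = r1 n - s /\
                   snd (g (c' + s)) = - Pfin n (fst (g (c' + s)))).
        { intros s Hs. destruct (H' (/2) ltac:(lra)) with s as [E1 E2]; auto.
          - intros u Hu. rewrite Hx1. simpl. apply nz_right; auto. rewrite pfin_last by lia. lra.
          - rewrite Hx1 in E1. split; [lra| rewrite E2; simpl; ring]. }
        intros s Hs. destruct (Rle_dec s (/2)) as [Hs2|Hs2].
        -- destruct (H1 s ltac:(lra)) as [E1 E2]. apply pair_eq; [|rewrite E2];
           (replace (r1 n - Rabs (s - /2)) with (r1 n - /2 + s) by (unfold Rabs; destruct Rcase_abs; lra)); [lra|rewrite E1; ring].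
        -- replace (c + s) with (c' + (s - /2)) by (unfold c'; ring).
           destruct (H2 (s - /2) ltac:(lra)) as [E1 E2]. apply pair_eq; [|rewrite E2];
           (replace (r1 n - Rabs (s - /2)) with (r1 n - (s - /2)) by (unfold Rabs; destruct Rcase_abs; lra)); [lra|].
           rewrite E1; ring.
    + intros s Hs. destruct (H 1 ltac:(lra)) with s as [E1 E2]; auto.
      * intros u Hu. rewrite Hx0. apply (nz_mid n l); auto; lia || lra.
      * rewrite Hx0 in E1. apply pair_eq; [lra| rewrite E2, E1]. replace (pfin n l + 1 * s) with (pfin n l + s) by ring; simpl; ring.
  - exists false. unfold SegF. destruct (Nat.eqb_spec l 1) as [El|El].
    + subst l. rewrite pfin_first in *.
      assert (H1 : forall s, 0 <= s <= /2 -> fst (g (c + s)) = r0 n + /2 - s /\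
                   snd (g (c + s)) = - Pfin n (fst (g (c + s)))).
      { intros s Hs. destruct (H (/2) ltac:(lra)) with s as [E1 E2]; auto.
        - intros u Hu. rewrite Hx0. apply nz_left; auto. rewrite pfin_first. lra.
        - rewrite Hx0 in E1. split; [lra| rewrite E2; simpl; ring]. }
      set (c' := c + /2).
      assert (Hx1 : fst (g c') = r0 n) by (destruct (H1 (/2) ltac:(lra)) as [E _]; unfold c'; lra).
      destruct (GML _ _ HT c') as [sig' [[-> | ->] H']].
      * assert (H2 : forall s, 0 <= s <= /2 -> fst (g (c' + s)) = r0 n + s /\
                   snd (g (c' + s)) = Pfin n (fst (g (c' + s)))).
        { intros s Hs. destruct (H' (/2) ltac:(lra)) with s as [E1 E2]; auto.
          - intros u Hu. rewrite Hx1. simpl. apply nz_left; auto. rewrite pfin_first. lra.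
          - rewrite Hx1 in E1. split; [lra| rewrite E2; simpl; ring]. }
        intros s Hs. destruct (Rle_dec s (/2)) as [Hs2|Hs2].
        -- destruct (H1 s ltac:(lra)) as [E1 E2]. apply pair_eq; [|rewrite E2];
           (replace (r0 n + Rabs (s - /2)) with (r0 n + /2 - s) by (unfold Rabs; destruct Rcase_abs; lra)); [lra|rewrite E1; ring].
        -- replace (c + s) with (c' + (s - /2)) by (unfold c'; ring).
           destruct (H2 (s - /2) ltac:(lra)) as [E1 E2]. apply pair_eq; [|rewrite E2];
           (replace (r0 n + Rabs (s - /2)) with (r0 n + (s - /2)) by (unfold Rabs; destruct Rcase_abs; lra)); [lra|].
           rewrite E1; ring.
      * exfalso. destruct (H' (/2) ltac:(lra)) with (/4) as [E1 _]; [|lra|].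
        { intros u Hu. rewrite Hx1. simpl in *. apply Rlt_not_eq. apply Pfin_neg; auto. lra. }
        destruct HT as [HL _]. destruct (HL (c' + /4)) as [[Hr _] _]. lra.
    + intros s Hs. destruct (H 1 ltac:(lra)) with s as [E1 E2]; auto.
      * intros u Hu. rewrite Hx0. apply (nz_mid n (l - 1)); auto; try lia.
        rewrite pfin_pred by lia. lra.
      * rewrite Hx0 in E1. apply pair_eq; [lra| rewrite E2, E1]. replace (pfin n l + -1 * s) with (pfin n l - s) by ring; simpl; ring.
Qed.

Lemma Rabs_lt_half s : 0 < s < 1 -> Rabs (s - /2) < /2.
Proof. intros; unfold Rabs; destruct Rcase_abs; lra. Qed.

Lemma on_graph_sc n x c : (c = 1 \/ c = -1) -> on_graph (Some n) (x, c * Pfin n x).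
Proof. unfold on_graph; simpl; intros [->| ->]; [left|right]; ring. Qed.

Lemma SegF_arc n l b s : (2 <= n)%nat -> (1 <= l <= n - 1)%nat -> 0 < s < 1 ->
  arc (Some n) (AF n l b) (SegF n l b s).
Proof.
  intros Hn Hl Hs. pose proof (Rabs_lt_half s Hs). pose proof (Rabs_pos (s - /2)).
  unfold SegF, AF. destruct b.
  - destruct (Nat.eqb_spec l (n - 1)) as [El|El].
    + subst l. right; left. simpl. rewrite pfin_last by lia. split; auto. split; [lra|].
      apply on_graph_sc. destruct (Rle_dec s (/2)); auto.
    + right; right. exists l. split; [lia|]. simpl. rewrite pfin_S. split; [lra|]. left; split; auto.
  - destruct (Nat.eqb_spec l 1) as [El|El].
    + subst l. left. simpl. rewrite pfin_first. split; auto. split; [lra|].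
      apply on_graph_sc. destruct (Rle_dec s (/2)); auto.
    + right; right. exists (l - 1)%nat. split; [lia|]. simpl.
      replace (S (l - 1)) with l by lia. rewrite pfin_pred by lia. split; [lra|]. right; split; auto.
Qed.

Lemma SegF_end n l b : (2 <= n)%nat -> (1 <= l <= n - 1)%nat -> pseudo (Some n) (SegF n l b 1).
Proof.
  intros Hn Hl. unfold SegF.
  replace (Rabs (1 - /2)) with (/2) by (rewrite Rabs_right; lra).
  destruct (Rle_dec 1 (/2)) as [H|H]; [lra|]. simpl.
  destruct b.
  - destruct (Nat.eqb_spec l (n - 1)) as [El|El].
    + exists (n - 1)%nat. split; [lia|]. rewrite pfin_last by lia.
      replace (r1 n - /2) with (pfin n (n-1)) by (rewrite pfin_last by lia; auto).
      rewrite Pfin_at_pfin by lia. f_equal; ring.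
    + exists (S l). split; [lia|]. rewrite <- pfin_S. rewrite Pfin_at_pfin by lia. auto.
  - destruct (Nat.eqb_spec l 1) as [El|El].
    + exists 1%nat. split; [lia|]. replace (r0 n + /2) with (pfin n 1) by (rewrite pfin_first; auto).
      rewrite Pfin_at_pfin by lia. f_equal; ring.
    + exists (l - 1)%nat. split; [lia|]. rewrite <- pfin_pred by lia. rewrite Pfin_at_pfin by lia. f_equal; ring.
Qed.

Lemma AF_inj n l1 l2 b1 b2 : (2 <= n)%nat -> (1 <= l1 <= n - 1)%nat -> (1 <= l2 <= n - 1)%nat ->
  AF n l1 b1 = AF n l2 b2 -> l1 = l2 /\ b1 = b2.
Proof.
  intros Hn H1 H2. unfold AF.
  destruct b1, b2; destruct (Nat.eqb_spec l1 (n - 1)); destruct (Nat.eqb_spec l2 (n - 1));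
    destruct (Nat.eqb_spec l1 1); destruct (Nat.eqb_spec l2 1); intros H;
    try (split; [lia|reflexivity]); exfalso; lia.
Qed.

Lemma nat_close a b : INR a - INR b < 1 -> INR b - INR a < 1 -> a = b.
Proof.
  intros H1 H2. destruct (Nat.lt_total a b) as [H|[H|H]]; auto;
  apply le_INR in H; rewrite S_INR in H; lra.
Qed.

Lemma Z_close a b : IZR a - IZR b < 1 -> IZR b - IZR a < 1 -> a = b.
Proof.
  intros H1 H2. rewrite <- minus_IZR in H1, H2. apply lt_IZR in H1. apply lt_IZR in H2. lia.
Qed.

Lemma pseudo_not_arc k (hk : valid_k k) q m : pseudo k q -> arc k m q -> False.
Proof.
  destruct k as [n|]; simpl in hk.
  - intros [l [Hl ->]]. simpl.
    intros [[_ [[_ H] _]]|[[_ [[H _] _]]|[j [Hj [[H1 H2] _]]]]].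
    + pose proof (pfin_le n 1 l ltac:(lia)). lra.
    + pose proof (pfin_le n l (n - 1) ltac:(lia)). lra.
    + rewrite pfin_S in H2. unfold pfin in H1, H2. apply (nat_between j l); lra.
  - intros [l ->]. simpl. intros [j [[H1 H2] _]]. apply (Z_between j l); auto.
Qed.

Lemma arc_uniq k (hk : valid_k k) q m m' : arc k m q -> arc k m' q -> m = m'.
Proof.
  destruct k as [n|]; simpl in hk; simpl.
  - assert (Hlast : pfin n 1 <= pfin n (n - 1)) by (apply pfin_le; lia).
    intros [[-> [[H1 H2] _]]|[[-> [[H1 H2] _]]|[j [Hj [[H1 H2] Hb]]]]]
           [[-> [[H1' H2'] _]]|[[-> [[H1' H2'] _]]|[j' [Hj' [[H1' H2'] Hb']]]]];
    try reflexivity; try lra;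
    try (pose proof (pfin_le n 1 j ltac:(lia)); lra);
    try (pose proof (pfin_le n 1 j' ltac:(lia)); lra);
    try (pose proof (pfin_le n (S j) (n - 1) ltac:(lia)); lra);
    try (pose proof (pfin_le n (S j') (n - 1) ltac:(lia)); lra).
    rewrite pfin_S in H2, H2'. assert (j = j') by (apply nat_close; unfold pfin in *; lra). subst j'.
    assert (Hnz : Pfin n (fst q) <> 0) by (apply (nz_mid n j); auto; lia || lra).
    destruct Hb as [[-> E]|[-> E]]; destruct Hb' as [[-> E']|[-> E']]; auto; exfalso; apply Hnz; lra.
  - intros [j [[H1 H2] Hb]] [j' [[H1' H2'] Hb']].
    assert (j = j') by (apply Z_close; lra). subst j'.
    assert (Hnz : Pinf (fst q) <> 0).
    { intros E. destruct (Pinf_zero _ E) as [l' El]. apply (Z_between j l'); lra. }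
    destruct Hb as [[-> E]|[-> E]]; destruct Hb' as [[-> E']|[-> E']]; auto; exfalso; apply Hnz; lra.
Qed.

Definition dir (b : bool) : R := if b then 1 else -1.
Definition SegI (l : Z) (b : bool) (s : R) : pt :=
  (IZR l + dir b * s, dir b * Pinf (IZR l + dir b * s)).
Definition AI (l : Z) (b : bool) : Z := if b then (2 * l)%Z else (2 * (l - 1) + 1)%Z.

Lemma seg_inf g : Traj None g -> forall c l, g c = (IZR l, 0) ->
  exists b, forall s, 0 <= s <= 1 -> g (c + s) = SegI l b s.
Proof.
  intros HT c l Hgc. assert (Hx0 : fst (g c) = IZR l) by (rewrite Hgc; auto).
  destruct (GML _ _ HT c) as [sig [Hsig H]].
  assert (Hb : exists b, sig = dir b) by (destruct Hsig as [->| ->]; [exists true|exists false]; auto).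
  destruct Hb as [b ->]. exists b. intros s Hs.
  destruct (H 1 ltac:(lra)) with s as [E1 E2]; auto.
  - intros u Hu E. destruct (Pinf_zero _ E) as [l' El]. rewrite Hx0 in El.
    destruct b; simpl in El.
    + apply (Z_between l l'); lra.
    + apply (Z_between (l - 1) l'); rewrite minus_IZR; simpl; lra.
  - rewrite Hx0 in E1. unfold SegI. apply pair_eq; [auto| rewrite E2, E1; auto].
Qed.

Lemma SegI_arc l b s : 0 < s < 1 -> arc None (AI l b) (SegI l b s).
Proof.
  intros Hs. unfold SegI, AI. destruct b; simpl.
  - exists l. split; [lra|]. left; split; auto; ring.
  - exists (l - 1)%Z. rewrite minus_IZR. simpl. split; [lra|]. right; split; auto; ring.
Qed.

Lemma SegI_end l b : pseudo None (SegI l b 1).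
Proof.
  unfold SegI. destruct b; simpl.
  - exists (l + 1)%Z. replace (IZR l + 1 * 1) with (IZR (l + 1)) by (rewrite plus_IZR; ring).
    rewrite Pinf_int. f_equal; ring.
  - exists (l - 1)%Z. replace (IZR l + -1 * 1) with (IZR (l - 1)) by (rewrite minus_IZR; ring).
    rewrite Pinf_int. f_equal; ring.
Qed.

Lemma AI_inj l1 l2 b1 b2 : AI l1 b1 = AI l2 b2 -> l1 = l2 /\ b1 = b2.
Proof. unfold AI; destruct b1, b2; intros; split; try lia; auto; exfalso; lia. Qed.

Definition SegK k (l : Z) (b : bool) (s : R) : pt :=
  match k with Some n => SegF n (Z.to_nat l) b s | None => SegI l b s end.
Definition AK k (l : Z) (b : bool) : Z :=
  match k with Some n => AF n (Z.to_nat l) b | None => AI l b end.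
Definition validK k (l : Z) : Prop :=
  match k with Some n => (1 <= Z.to_nat l <= n - 1)%nat | None => True end.

Lemma seg_gen k (hk : valid_k k) g : Traj k g -> forall c, pseudo k (g c) ->
  exists l b, validK k l /\ forall s, 0 <= s <= 1 -> g (c + s) = SegK k l b s.
Proof.
  intros HT c Hp. destruct k as [n|]; simpl in *.
  - destruct Hp as [l [Hl Hgc]]. destruct (seg_fin n hk g HT c l Hl Hgc) as [b Hb].
    exists (Z.of_nat l), b. rewrite Nat2Z.id. split; auto.
  - destruct Hp as [l Hgc]. destruct (seg_inf g HT c l Hgc) as [b Hb]. exists l, b; split; auto.
Qed.

Lemma arcK k (hk : valid_k k) l b s : validK k l -> 0 < s < 1 -> arc k (AK k l b) (SegK k l b s).
Proof. destruct k; simpl; intros; [apply SegF_arc|apply SegI_arc]; auto. Qed.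

Lemma endK k (hk : valid_k k) l b : validK k l -> pseudo k (SegK k l b 1).
Proof. destruct k; simpl; intros; [apply SegF_end|apply SegI_end]; auto. Qed.

Lemma AK_inj k (hk : valid_k k) l1 l2 b1 b2 : validK k l1 -> validK k l2 ->
  AK k l1 b1 = AK k l2 b2 -> l1 = l2 /\ b1 = b2.
Proof.
  destruct k; simpl; intros H1 H2 E.
  - destruct (AF_inj _ _ _ _ _ hk H1 H2 E) as [E1 E2]. split; auto. lia.
  - apply AI_inj; auto.
Qed.

Lemma pseudo_neg k q : pseudo k q -> pseudo k (fst q, - snd q).
Proof.
  destruct k; simpl.
  - intros [l [Hl ->]]. exists l; split; auto. simpl. f_equal; ring.
  - intros [l ->]. exists l. simpl. f_equal; ring.
Qed.

Lemma pseudo_next k (hk : valid_k k) g : Traj k g -> forall c, pseudo k (g c) -> pseudo k (g (c + 1)).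
Proof.
  intros HT c Hp. destruct (seg_gen k hk g HT c Hp) as [l [b [Hl Hs]]].
  rewrite Hs by lra. apply endK; auto.
Qed.

Lemma pseudo_prev k (hk : valid_k k) g : Traj k g -> forall c, pseudo k (g c) -> pseudo k (g (c - 1)).
Proof.
  intros HT c Hp.
  assert (H1 : pseudo k (rev g (- c))).
  { unfold rev. rewrite Ropp_involutive. apply pseudo_neg; auto. }
  pose proof (pseudo_next k hk _ (Traj_rev k g HT) _ H1) as H2.
  apply pseudo_neg in H2. unfold rev in H2; simpl in H2. rewrite Ropp_involutive in H2.
  replace (- (- c + 1)) with (c - 1) in H2 by ring. destruct (g (c - 1)); auto.
Qed.

Lemma pseudo_int k (hk : valid_k k) g : Traj k g -> forall c, pseudo k (g c) -> forall z, pseudo k (g (c + IZR z)).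
Proof.
  intros HT c Hp.
  assert (forall m : nat, pseudo k (g (c + INR m)) /\ pseudo k (g (c - INR m))).
  { induction m.
    - simpl. rewrite Rplus_0_r, Rminus_0_r; auto.
    - rewrite S_INR. destruct IHm as [H1 H2]. split.
      + rewrite <- Rplus_assoc. apply pseudo_next; auto.
      + replace (c - (INR m + 1)) with (c - INR m - 1) by ring. apply pseudo_prev; auto. }
  intros z. destruct (Z_le_gt_dec 0 z).
  - replace (IZR z) with (INR (Z.to_nat z)) by (rewrite INR_IZR_INZ; f_equal; lia). apply H.
  - replace (c + IZR z) with (c - INR (Z.to_nat (- z))). apply H.
    rewrite INR_IZR_INZ. rewrite Z2Nat.id by lia. rewrite opp_IZR. ring.
Qed.

Lemma zero_pt k q : Lambda k q -> Pk k (fst q) = 0 -> snd q = 0.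
Proof.
  intros HL HP. assert (Hog : on_graph k q) by (destruct k; simpl in HL; tauto).
  destruct Hog; lra.
Qed.

Lemma at_r1 n (hn : (2 <= n)%nat) g : Traj (Some n) g -> forall c, fst (g c) = r1 n -> pseudo (Some n) (g (c + /2)).
Proof.
  intros HT c Hx. pose proof (r0_lt_r1 n hn) as Hrr.
  destruct (GML _ _ HT c) as [sig [[-> | ->] H]].
  - exfalso. destruct (H (/2) ltac:(lra)) with (/4) as [E1 _]; [|lra|].
    { intros u Hu. rewrite Hx. simpl in *. apply Rlt_not_eq. apply Pfin_neg; auto. lra. }
    destruct HT as [HL _]. destruct (HL (c + /4)) as [[_ Hr] _]. lra.
  - destruct (H (/2) ltac:(lra)) with (/2) as [E1 E2]; [|lra|].
    { intros u Hu. rewrite Hx. simpl. apply nz_right; auto. rewrite pfin_last by lia. lra. }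
    exists (n - 1)%nat. split; [lia|]. apply pair_eq.
    + rewrite E1, Hx, pfin_last by lia. ring.
    + rewrite E2, E1, Hx. replace (r1 n + -1 * /2) with (pfin n (n-1)) by (rewrite pfin_last by lia; ring).
      simpl. rewrite Pfin_at_pfin by lia. ring.
Qed.

Lemma at_r0 n (hn : (2 <= n)%nat) g : Traj (Some n) g -> forall c, fst (g c) = r0 n -> pseudo (Some n) (g (c + /2)).
Proof.
  intros HT c Hx. pose proof (r0_lt_r1 n hn) as Hrr.
  destruct (GML _ _ HT c) as [sig [[-> | ->] H]].
  - destruct (H (/2) ltac:(lra)) with (/2) as [E1 E2]; [|lra|].
    { intros u Hu. rewrite Hx. simpl. apply nz_left; auto. rewrite pfin_first. lra. }
    exists 1%nat. split; [lia|]. apply pair_eq.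
    + rewrite E1, Hx, pfin_first. ring.
    + rewrite E2, E1, Hx. replace (r0 n + 1 * /2) with (pfin n 1) by (rewrite pfin_first; ring).
      simpl. rewrite Pfin_at_pfin by lia. ring.
  - exfalso. destruct (H (/2) ltac:(lra)) with (/4) as [E1 _]; [|lra|].
    { intros u Hu. rewrite Hx. simpl in *. apply Rlt_not_eq. apply Pfin_neg; auto. lra. }
    destruct HT as [HL _]. destruct (HL (c + /4)) as [[Hr _] _]. lra.
Qed.

Lemma exists_pseudo_inf g : Traj None g -> exists c, pseudo None (g c).
Proof.
  intros HT. set (x0 := fst (g 0)).
  destruct (archimed x0) as [Hu1 Hu2]. set (u := up x0) in *.
  destruct (GML _ _ HT 0) as [sig [[-> | ->] H]].
  - set (d := IZR u - x0).
    destruct (H d ltac:(unfold d; lra)) with d as [E1 E2]; [|unfold d; lra|].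
    { intros s Hs E. destruct (Pinf_zero _ E) as [l' El]. fold x0 in El.
      apply (Z_between (u - 1) l'); rewrite minus_IZR; simpl; unfold d in Hs; lra. }
    exists (0 + d). exists u. apply pair_eq; [rewrite E1; fold x0; unfold d; ring|].
    rewrite E2, E1. fold x0. replace (x0 + 1 * d) with (IZR u) by (unfold d; ring). simpl. rewrite Pinf_int; ring.
  - set (v := (u - 1)%Z). assert (Hv : IZR v = IZR u - 1) by (unfold v; rewrite minus_IZR; auto).
    set (d := x0 - IZR v).
    destruct (Req_dec d 0) as [Hd0|Hd0].
    + exists 0. exists v. destruct HT as [HL _]. apply pair_eq; [fold x0; unfold d in Hd0; lra|].
      apply (zero_pt None); auto. simpl. replace (fst (g 0)) with (IZR v) by (fold x0; unfold d in Hd0; lra).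
      apply Pinf_int.
    + destruct (H d ltac:(unfold d in *; lra)) with d as [E1 E2]; [|unfold d in *; lra|].
      { intros s Hs E. destruct (Pinf_zero _ E) as [l' El]. fold x0 in El.
        apply (Z_between v l'); unfold d in Hs; lra. }
      exists (0 + d). exists v. apply pair_eq; [rewrite E1; fold x0; unfold d; ring|].
      rewrite E2, E1. fold x0. replace (x0 + -1 * d) with (IZR v) by (unfold d; ring). simpl. rewrite Pinf_int; ring.
Qed.

Lemma exists_pseudo_fin n (hn : (2 <= n)%nat) g : Traj (Some n) g -> exists c, pseudo (Some n) (g c).
Proof.
  intros HT. pose proof (r0_lt_r1 n hn) as Hrr.
  assert (HL := proj1 HT).
  set (x0 := fst (g 0)).
  assert (Hx0 : r0 n <= x0 <= r1 n) by (destruct (HL 0) as [H _]; exact H).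
  assert (Hpt : forall x, x0 = x -> Pfin n x = 0 -> pseudo (Some n) (g 0) \/ True) by auto.
  assert (Hzero : forall l, (1 <= l <= n - 1)%nat -> x0 = pfin n l -> pseudo (Some n) (g 0)).
  { intros l Hl E. exists l. split; auto. apply pair_eq; auto.
    apply (zero_pt (Some n)); auto. simpl. fold x0. rewrite E. apply Pfin_at_pfin; auto. }
  assert (Hn2 : 2 <= INR n) by (replace 2 with (INR 2) by reflexivity; apply le_INR; lia).
  destruct (archimed (x0 + INR n / 2)) as [Hu1 Hu2]. set (u := up (x0 + INR n / 2)) in *.
  assert (Hr0 : r0 n = / 2 - INR n / 2) by (unfold r0; field).
  assert (Hr1 : r1 n = INR n / 2 - / 2) by (unfold r1; field).
  destruct (GML _ _ HT 0) as [sig [[-> | ->] H]].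
  - assert (Hu0 : (1 <= u)%Z) by (assert (0 < IZR u) by lra; apply lt_IZR in H0; lia).
    set (l := Z.to_nat u).
    assert (Hl : INR l = IZR u) by (unfold l; rewrite INR_IZR_INZ; f_equal; lia).
    destruct (le_lt_dec l (n - 1)) as [Hle|Hgt].
    + assert (Hl1 : (1 <= l)%nat) by (unfold l; lia).
      set (d := pfin n l - x0).
      assert (Hd : 0 < d <= 1) by (unfold d, pfin; lra).
      destruct (H d ltac:(lra)) with d as [E1 E2]; [|lra|].
      { intros s Hs. fold x0. pose proof (pfin_range n l ltac:(lia)). simpl. apply Pfin_nz; [auto|unfold d in *; lra|unfold d in *; lra|].
        intros m Hm E. apply (nat_between (l - 1) m); rewrite INR_pred by lia; unfold d, pfin in *; lra. }
      exists (0 + d). exists l. split; [lia|]. apply pair_eq.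
      * rewrite E1. fold x0. unfold d; ring.
      * rewrite E2, E1. fold x0. replace (x0 + 1 * d) with (pfin n l) by (unfold d; ring).
        simpl. rewrite Pfin_at_pfin by lia. ring.
    + assert (INR n <= INR l) by (apply le_INR; lia).
      assert (Hp : pfin n (n - 1) <= x0) by (rewrite pfin_last by lia; lra).
      destruct (Req_dec x0 (r1 n)) as [E|E].
      * exists (0 + /2). apply at_r1; auto.
      * destruct (Req_dec x0 (pfin n (n - 1))) as [E'|E'].
        { exists 0. apply (Hzero (n - 1)%nat); auto. lia. }
        set (d := r1 n - x0).
        destruct (H d ltac:(unfold d; lra)) with d as [E1 _]; [|unfold d; lra|].
        { intros s Hs. fold x0. apply nz_right; auto. unfold d in Hs; lra. }
        exists (d + /2). replace d with (0 + d) by ring. apply at_r1; auto.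
        rewrite E1. fold x0. unfold d; ring.
  - set (v := (u - 1)%Z). assert (Hv : IZR v = IZR u - 1) by (unfold v; rewrite minus_IZR; auto).
    assert (Hv0 : (0 <= v)%Z) by (assert (-1 < IZR v) by lra; apply lt_IZR in H0; lia).
    set (l := Z.to_nat v).
    assert (Hl : INR l = IZR v) by (unfold l; rewrite INR_IZR_INZ; f_equal; lia).
    destruct (le_lt_dec 1 l) as [Hl1|Hl0].
    + assert (Hle : (l <= n - 1)%nat).
      { assert (INR l < INR n) by lra. apply INR_lt in H0. lia. }
      set (d := x0 - pfin n l).
      assert (Hd : 0 <= d < 1) by (unfold d, pfin; lra).
      destruct (Req_dec d 0) as [Hd0|Hd0].
      { exists 0. apply (Hzero l); auto. unfold d in Hd0; lra. }
      destruct (H d ltac:(lra)) with d as [E1 E2]; [|lra|].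
      { intros s Hs. fold x0. destruct (Nat.eq_dec l (n - 1)) as [El|El].
        - apply nz_right; auto. rewrite <- El. unfold d in *; lra.
        - apply (nz_mid n l); auto; try lia. unfold d in *; lra. }
      exists (0 + d). exists l. split; [lia|]. apply pair_eq.
      * rewrite E1. fold x0. unfold d; ring.
      * rewrite E2, E1. fold x0. replace (x0 + -1 * d) with (pfin n l) by (unfold d; ring).
        simpl. rewrite Pfin_at_pfin by lia. ring.
    + assert (l = 0%nat) by lia.
      assert (Hp : x0 < pfin n 1) by (rewrite pfin_first; rewrite H0 in Hl; simpl in Hl; lra).
      destruct (Req_dec x0 (r0 n)) as [E|E].
      * exists (0 + /2). apply at_r0; auto.
      * set (d := x0 - r0 n).
        destruct (H d ltac:(unfold d; lra)) with d as [E1 _]; [|unfold d; lra|].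
        { intros s Hs. fold x0. apply nz_left; auto. unfold d in Hs; lra. }
        exists (d + /2). replace d with (0 + d) by ring. apply at_r0; auto.
        rewrite E1. fold x0. unfold d; ring.
Qed.

Lemma exists_pseudo k (hk : valid_k k) g : Traj k g -> exists c, pseudo k (g c).
Proof. destruct k; [apply exists_pseudo_fin; auto| apply exists_pseudo_inf]. Qed.

Lemma is_derive_shift (f : R -> R) a t l : is_derive f (t + a) l -> is_derive (fun s => f (s + a)) t l.
Proof.
  intros H.
  assert (H2 : is_derive (fun s : R => s + a) t 1).
  { auto_derive; auto; ring. }
  eapply is_derive_eq. apply (is_derive_comp f (fun s => s + a) t l 1 H H2).
  unfold scal; simpl; unfold mult; simpl; ring.
Qed.

Lemma continuous_shift (f : R -> R) a t : continuous f (t + a) -> continuous (fun s => f (s + a)) t.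
Proof.
  intros H. apply (continuous_comp (fun s : R => s + a) f).
  - apply (continuous_plus (fun s : R => s) (fun _ => a)); [apply continuous_id| apply continuous_const].
  - exact H.
Qed.

Lemma gt_shift ZZ g a : global_trajectory ZZ g -> global_trajectory ZZ (fun t => g (t + a)).
Proof.
  intros [Hc [tt [Hinc [Hu [Hd [Hp Hj]]]]]].
  split.
  - intros t. split; apply (continuous_shift (fun u => _ (g u))); apply Hc.
  - exists (fun i => tt i - a). split; [|split; [|split; [|split]]].
    + intros i; specialize (Hinc i); lra.
    + intros M. destruct (Hu (M + a)) as [i Hi]. exists i; lra.
    + intros M. destruct (Hd (M + a)) as [i Hi]. exists i; lra.
    + intros i. specialize (Hp i).
      assert (Hic : forall F, integral_curve F g (tt i) (tt (Z.succ i)) ->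
                 integral_curve F (fun t => g (t + a)) (tt i - a) (tt (Z.succ i) - a)).
      { intros F HF t Ht. destruct (HF (t + a) ltac:(lra)) as [H1 H2].
        split; apply (is_derive_shift (fun u => _ (g u))); auto. }
      destruct Hp as [[H1 H2]|[[H1 H2]|[H1 H2]]]; [left|right; left|right; right]; split; auto;
        intros t Ht; apply H2; lra.
    + intros i. replace (tt i - a + a) with (tt i) by ring. apply Hj.
Qed.

Lemma Omega_shift k (hk : valid_k k) g a : Omega k g -> Omega k (fun t => g (t + a)).
Proof.
  intros HO. split; [apply gt_shift, HO|].
  rewrite Rplus_0_l. apply (proj1 (Omega_Traj k hk g HO)).
Qed.

Lemma itin_T1 k g j m : itin k (T1 g) j m <-> itin k g (Z.succ j) m.
Proof.
  unfold itin, T1. rewrite succ_IZR. replace (IZR j + / 2 + 1) with (IZR j + 1 + / 2) by ring. tauto.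
Qed.

Lemma sim_refl k g : sim k g g.
Proof. intros j m; tauto. Qed.
Lemma sim_sym k g h : sim k g h -> sim k h g.
Proof. intros H j m; specialize (H j m); tauto. Qed.
Lemma sim_trans k g h f : sim k g h -> sim k h f -> sim k g f.
Proof. intros H1 H2 j m; specialize (H1 j m); specialize (H2 j m); tauto. Qed.

Lemma sim_T1 k g1 g2 : sim k g1 g2 -> sim k (T1 g1) (T1 g2).
Proof. intros H j m. rewrite !itin_T1. apply H. Qed.

Lemma sim_T1_inv k g1 g2 : sim k (T1 g1) (T1 g2) -> sim k g1 g2.
Proof.
  intros H j m. replace j with (Z.succ (Z.pred j)) by lia. rewrite <- !itin_T1. apply H.
Qed.

Lemma Omega_T1 k (hk : valid_k k) g : Omega k g -> Omega k (T1 g).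
Proof. intros H. apply (Omega_shift k hk g 1 H). Qed.

Lemma itin_pseudo k (hk : valid_k k) g j m : pseudo k (g (IZR j)) ->
  (itin k g j m <-> arc k m (g (IZR j + /2))).
Proof.
  intros Hp. unfold itin. split.
  - intros [H|[_ H]]; auto. exfalso; apply (pseudo_not_arc k hk _ m Hp H).
  - intros H; right; auto.
Qed.

Lemma arc_same k (hk : valid_k k) A q1 q2 m : arc k A q1 -> arc k A q2 -> (arc k m q1 <-> arc k m q2).
Proof.
  intros H1 H2. split; intros H.
  - rewrite (arc_uniq k hk q1 m A H H1); auto.
  - rewrite (arc_uniq k hk q2 m A H H2); auto.
Qed.

Lemma rep_exists k (hk : valid_k k) g : Omega k g -> exists h, Omega k h /\ sim k g h /\ pseudo k (h 0).
Proof.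
  intros HO. pose proof (Omega_Traj k hk g HO) as HT.
  destruct (exists_pseudo k hk g HT) as [c Hc].
  assert (Hc1 : exists c1, -1 < c1 <= 0 /\ forall z, pseudo k (g (c1 + IZR z))).
  { destruct (archimed c) as [H1 H2].
    destruct (Req_dec (c - IZR (up c)) (-1)) as [E|E].
    - exists 0. split; [lra|]. intros z.
      replace (0 + IZR z) with (c + IZR (z + 1 - up c)) by (rewrite minus_IZR, plus_IZR; simpl; lra).
      apply pseudo_int; auto.
    - exists (c - IZR (up c)). split; [lra|]. intros z.
      replace (c - IZR (up c) + IZR z) with (c + IZR (z - up c)) by (rewrite minus_IZR; ring).
      apply pseudo_int; auto. }
  destruct Hc1 as [c1 [Hc1 Hps]].
  exists (fun t => g (t + c1)). split; [apply Omega_shift; auto|]. split.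
  - intros j m.
    rewrite (itin_pseudo k hk (fun t => g (t + c1)) j m) by (rewrite Rplus_comm; apply Hps). simpl.
    destruct (seg_gen k hk g HT (c1 + IZR j) (Hps j)) as [l [b [Hl Hs]]].
    assert (Hmid : arc k (AK k l b) (g (IZR j + /2 + c1))).
    { replace (IZR j + /2 + c1) with (c1 + IZR j + /2) by ring. rewrite Hs by lra. apply arcK; auto; lra. }
    destruct (Req_dec c1 0) as [E|E].
    + subst c1. rewrite itin_pseudo; auto; [|rewrite <- (Rplus_0_l (IZR j)); apply Hps].
      rewrite Rplus_0_r. tauto.
    + assert (Hj : arc k (AK k l b) (g (IZR j))).
      { replace (g (IZR j)) with (g (c1 + IZR j + - c1)) by (f_equal; ring). rewrite Hs by lra. apply arcK; auto; lra. }
      unfold itin. split.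
      * intros [H|[Hp _]]; [|exfalso; apply (pseudo_not_arc k hk _ _ Hp Hj)].
        apply (arc_same k hk _ _ _ m Hj Hmid); auto.
      * intros H. left. apply (arc_same k hk _ _ _ m Hj Hmid); auto.
  - simpl. rewrite Rplus_0_l. replace c1 with (c1 + IZR 0) by (simpl; ring). apply Hps.
Qed.

Lemma rep_unique k (hk : valid_k k) h1 h2 : Omega k h1 -> Omega k h2 -> pseudo k (h1 0) -> pseudo k (h2 0) ->
  sim k h1 h2 -> h1 = h2.
Proof.
  intros O1 O2 P1 P2 S. pose proof (Omega_Traj k hk h1 O1) as T1'. pose proof (Omega_Traj k hk h2 O2) as T2'.
  apply functional_extensionality. intros t.
  destruct (archimed t) as [H1 H2]. set (j := (up t - 1)%Z).
  assert (Hj : IZR j <= t < IZR j + 1) by (unfold j; rewrite minus_IZR; simpl; lra).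
  assert (Q1 : pseudo k (h1 (IZR j))) by (rewrite <- (Rplus_0_l (IZR j)); apply pseudo_int; auto).
  assert (Q2 : pseudo k (h2 (IZR j))) by (rewrite <- (Rplus_0_l (IZR j)); apply pseudo_int; auto).
  destruct (seg_gen k hk h1 T1' _ Q1) as [l1 [b1 [Hl1 Hs1]]].
  destruct (seg_gen k hk h2 T2' _ Q2) as [l2 [b2 [Hl2 Hs2]]].
  assert (A1 : arc k (AK k l1 b1) (h1 (IZR j + /2))) by (rewrite Hs1 by lra; apply arcK; auto; lra).
  assert (A2 : arc k (AK k l2 b2) (h2 (IZR j + /2))) by (rewrite Hs2 by lra; apply arcK; auto; lra).
  assert (A12 : arc k (AK k l1 b1) (h2 (IZR j + /2))).
  { apply (itin_pseudo k hk h2 j); auto. apply S. apply (itin_pseudo k hk h1 j); auto. }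
  pose proof (arc_uniq k hk _ _ _ A12 A2) as E.
  destruct (AK_inj k hk _ _ _ _ Hl1 Hl2 E) as [-> ->].
  replace t with (IZR j + (t - IZR j)) by ring. rewrite Hs1, Hs2 by lra. auto.
Qed.

Lemma rep_spec k (hk : valid_k k) g : Omega k g -> Omega k (rep k g) /\ sim k g (rep k g) /\ pseudo k (rep k g 0).
Proof.
  intros HO. unfold rep. apply (epsilon_spec (inhabits g) (fun h => Omega k h /\ sim k g h /\ pseudo k (h 0))).
  apply rep_exists; auto.
Qed.

Lemma rep_T1 k (hk : valid_k k) g : Omega k g -> rep k (T1 g) = T1 (rep k g).
Proof.
  intros HO. destruct (rep_spec k hk g HO) as [O1 [S1 P1]].
  destruct (rep_spec k hk (T1 g) (Omega_T1 k hk g HO)) as [O2 [S2 P2]].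
  apply (rep_unique k hk); auto.
  - apply Omega_T1; auto.
  - unfold T1. apply (pseudo_next k hk _ (Omega_Traj k hk _ O1) 0) in P1. exact P1.
  - apply sim_trans with (T1 g); [apply sim_sym; auto| apply sim_T1; auto].
Qed.

Definition q34 := 3 / 4.
Definition good (e : Z -> R) := exists C, forall i, 0 <= e i <= C * q34 ^ (Z.abs_nat i).
Definition SZ (e : Z -> R) : R :=
  e 0%Z + Series (fun n => e (Z.of_nat (S n)) + e (- Z.of_nat (S n))%Z).

Lemma pow_le1 (q : R) d : 0 <= q <= 1 -> q ^ d <= 1.
Proof. intros Hq; induction d; simpl; [lra|]. pose proof (pow_le q d ltac:(lra)). nra. Qed.

Lemma pow_decr (q : R) n m : 0 <= q <= 1 -> (n <= m)%nat -> q ^ m <= q ^ n.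
Proof.
  intros Hq Hnm. replace m with (n + (m - n))%nat by lia. rewrite pow_add.
  rewrite <- (Rmult_1_r (q ^ n)) at 2. apply Rmult_le_compat_l; [apply pow_le; lra|].
  apply pow_le1; auto.
Qed.

Lemma q34_range : 0 <= q34 <= 1.
Proof. unfold q34; lra. Qed.

Lemma good_C e : good e -> exists C, 0 <= C /\ forall i, 0 <= e i <= C * q34 ^ (Z.abs_nat i).
Proof.
  intros [C HC]. exists (Rabs C). split; [apply Rabs_pos|]. intros i. destruct (HC i) as [H1 H2].
  split; auto. pose proof (pow_le q34 (Z.abs_nat i) (proj1 q34_range)).
  pose proof (Rle_abs C). nra.
Qed.

Lemma good_ex e (f : nat -> Z) : good e -> (forall n, (n <= Z.abs_nat (f n))%nat) -> ex_series (fun n => e (f n)).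
Proof.
  intros He Hf. destruct (good_C e He) as [C [HC0 HC]].
  apply (@ex_series_le R_AbsRing R_CompleteNormedModule _ (fun n => C * q34 ^ n)).
  - intros n. unfold norm; simpl. unfold abs; simpl. destruct (HC (f n)) as [H1 H2].
    rewrite Rabs_right by lra. eapply Rle_trans; [apply H2|]. apply Rmult_le_compat_l; auto.
    apply pow_decr; auto. apply q34_range.
  - apply (ex_series_scal_l C (fun n => q34 ^ n)). apply ex_series_geom. rewrite Rabs_right; unfold q34; lra.
Qed.

Lemma ex_plus_R (a b : nat -> R) : ex_series a -> ex_series b -> ex_series (fun n => a n + b n).
Proof. intros; apply (ex_series_plus a b); auto. Qed.

Lemma SZ_le a b : (forall i, 0 <= a i <= b i) -> good b -> SZ a <= SZ b.
Proof.
  intros H Hb. unfold SZ. apply Rplus_le_compat; [apply H|].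
  apply Series_le.
  - intros n. pose proof (H (Z.of_nat (S n))). pose proof (H (- Z.of_nat (S n))%Z). lra.
  - apply ex_plus_R; apply good_ex; auto; intros; lia.
Qed.

Lemma SZ_scal c a : SZ (fun i => c * a i) = c * SZ a.
Proof.
  unfold SZ. rewrite Rmult_plus_distr_l. f_equal.
  rewrite <- Series_scal_l. apply Series_ext. intros; ring.
Qed.

Lemma SZ_shift e : good e -> SZ (fun i => e (Z.succ i)) = SZ e.
Proof.
  intros He. unfold SZ.
  assert (E1 : Series (fun n => e (Z.succ (Z.of_nat (S n))) + e (Z.succ (- Z.of_nat (S n)))) =
               Series (fun n => e (Z.of_nat (S (S n)))) + Series (fun n => e (- Z.of_nat n)%Z)).
  { rewrite <- Series_plus; [|apply good_ex; auto; intros; lia|apply good_ex; auto; intros; lia].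
    apply Series_ext. intros n. f_equal; f_equal; lia. }
  rewrite E1.
  assert (E2 : Series (fun n => e (- Z.of_nat n)%Z) = e 0%Z + Series (fun n => e (- Z.of_nat (S n))%Z)).
  { rewrite Series_incr_1; [auto|apply good_ex; auto; intros; lia]. }
  assert (E3 : Series (fun n => e (Z.of_nat (S n))) = e 1%Z + Series (fun n => e (Z.of_nat (S (S n))))).
  { rewrite Series_incr_1; [auto|apply good_ex; auto; intros; lia]. }
  rewrite Series_plus by (apply good_ex; auto; intros; lia).
  rewrite E2, E3. simpl (Z.succ 0). ring.
Qed.

Lemma good_succ e : good e -> good (fun i => e (Z.succ i)).
Proof.
  intros He. destruct (good_C e He) as [C [HC0 HC]]. exists (C * / q34). intros i.
  destruct (HC (Z.succ i)) as [H1 H2]. split; auto. eapply Rle_trans; [apply H2|].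
  unfold q34 in *. rewrite Rmult_assoc. apply Rmult_le_compat_l; auto.
  apply (Rmult_le_reg_l (3/4)); [lra|]. rewrite <- Rmult_assoc. replace (3 / 4 * / (3 / 4)) with 1 by field.
  rewrite Rmult_1_l. rewrite tech_pow_Rmult. apply pow_decr; [lra|lia].
Qed.

Lemma good_pred e : good e -> good (fun i => e (Z.pred i)).
Proof.
  intros He. destruct (good_C e He) as [C [HC0 HC]]. exists (C * / q34). intros i.
  destruct (HC (Z.pred i)) as [H1 H2]. split; auto. eapply Rle_trans; [apply H2|].
  unfold q34 in *. rewrite Rmult_assoc. apply Rmult_le_compat_l; auto.
  apply (Rmult_le_reg_l (3/4)); [lra|]. rewrite <- Rmult_assoc. replace (3 / 4 * / (3 / 4)) with 1 by field.
  rewrite Rmult_1_l. rewrite tech_pow_Rmult. apply pow_decr; [lra|lia].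
Qed.

Lemma good_scal c e : 0 <= c -> good e -> good (fun i => c * e i).
Proof.
  intros Hc He. destruct (good_C e He) as [C [HC0 HC]]. exists (c * C). intros i.
  destruct (HC i). split; [nra|]. rewrite Rmult_assoc. apply Rmult_le_compat_l; auto.
Qed.

Lemma pow_lin m : INR m + 1 <= 2 * (3 / 2) ^ m.
Proof.
  induction m; [simpl; lra|]. rewrite S_INR. rewrite <- tech_pow_Rmult.
  assert (1 <= (3/2) ^ m) by (apply pow_R1_Rle; lra). lra.
Qed.

Lemma good_of_D (D : Z -> R) K : 0 <= K -> (forall i, 0 <= D i <= K + 2 * INR (Z.abs_nat i)) ->
  good (fun i => (/ 2) ^ (Z.abs_nat i) * D i).
Proof.
  intros HK HD. exists (2 * (K + 2)). intros i. destruct (HD i) as [H1 H2].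
  set (m := Z.abs_nat i) in *.
  pose proof (pow_le (/2) m ltac:(lra)) as Hp.
  split; [nra|].
  pose proof (pow_lin m). pose proof (pos_INR m).
  assert (K + 2 * INR m <= (K + 2) * (INR m + 1)) by nra.
  assert (Hq : q34 ^ m = (/2) ^ m * (3/2) ^ m) by (rewrite <- Rpow_mult_distr; unfold q34; f_equal; field).
  rewrite Hq.
  apply Rle_trans with ((/2) ^ m * ((K + 2) * (INR m + 1))); [apply Rmult_le_compat_l; lra|].
  apply Rle_trans with ((/2) ^ m * ((K + 2) * (2 * (3/2)^m))); [apply Rmult_le_compat_l; [lra|apply Rmult_le_compat_l; lra]|].
  right; ring.
Qed.

Lemma euclid_pos a b : 0 <= euclid a b.
Proof. apply sqrt_pos. Qed.

Lemma euclid_le a b : euclid a b <= Rabs (fst a - fst b) + Rabs (snd a - snd b).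
Proof.
  unfold euclid. set (u := fst a - fst b). set (v := snd a - snd b).
  pose proof (Rabs_pos u). pose proof (Rabs_pos v).
  rewrite <- (sqrt_pow2 (Rabs u + Rabs v)) by lra. apply sqrt_le_1_alt.
  rewrite <- (pow2_abs u), <- (pow2_abs v). nra.
Qed.

Lemma dist_bounds a B : (exists b, B b) -> 0 <= dist_to_set a B /\ forall b, B b -> dist_to_set a B <= euclid a b.
Proof.
  intros [b0 Hb0]. unfold dist_to_set.
  set (E := fun r => exists b, B b /\ r = euclid a b).
  destruct (Glb_Rbar_correct E) as [H1 H2].
  assert (H0 : Rbar_le 0 (Glb_Rbar E)) by (apply H2; intros x [b [_ ->]]; simpl; apply euclid_pos).
  assert (Hup : forall b, B b -> Rbar_le (Glb_Rbar E) (euclid a b)) by (intros b Hb; apply H1; exists b; auto).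
  specialize (Hup b0 Hb0) as Hup0.
  remember (Glb_Rbar E) as l. destruct l as [r| |]; simpl in *; try contradiction.
  split; auto.
Qed.

Lemma lub_bound (S : R -> Prop) K : (exists r, S r) -> (forall r, S r -> 0 <= r <= K) -> 0 <= real (Lub_Rbar S) <= K.
Proof.
  intros [r0 Hr0] HS. destruct (Lub_Rbar_correct S) as [H1 H2].
  assert (Hl : Rbar_le (Lub_Rbar S) K) by (apply H2; intros x Hx; simpl; apply HS; auto).
  assert (Hr : Rbar_le r0 (Lub_Rbar S)) by (apply H1; auto).
  specialize (HS r0 Hr0).
  remember (Lub_Rbar S) as l. destruct l as [r| |]; simpl in *; try contradiction. lra.
Qed.

Lemma hausdorff_bounds A B K : (exists a, A a) -> (exists b, B b) ->
  (forall a b, A a -> B b -> euclid a b <= K) -> 0 <= hausdorff A B <= K.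
Proof.
  intros [a0 Ha0] [b0 Hb0] HK. unfold hausdorff.
  assert (L1 : 0 <= real (Lub_Rbar (fun r => exists a, A a /\ r = dist_to_set a B)) <= K).
  { apply lub_bound; [exists (dist_to_set a0 B); exists a0; auto|].
    intros r [a [Ha ->]]. destruct (dist_bounds a B (ex_intro _ b0 Hb0)) as [D1 D2].
    split; auto. eapply Rle_trans; [apply (D2 b0 Hb0)|]. apply HK; auto. }
  assert (L2 : 0 <= real (Lub_Rbar (fun r => exists b, B b /\ r = dist_to_set b A)) <= K).
  { apply lub_bound; [exists (dist_to_set b0 A); exists b0; auto|].
    intros r [b [Hb ->]]. destruct (dist_bounds b A (ex_intro _ a0 Ha0)) as [D1 D2].
    split; auto. eapply Rle_trans; [apply (D2 a0 Ha0)|].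
    unfold euclid. replace ((fst b - fst a0) ^ 2 + (snd b - snd a0) ^ 2) with
      ((fst a0 - fst b) ^ 2 + (snd a0 - snd b) ^ 2) by ring. apply HK; auto. }
  split; [eapply Rle_trans; [apply L1| apply Rmax_l]| apply Rmax_lub; lra].
Qed.

Definition Dt k g h (i : Z) : R :=
  hausdorff (image_on (rep k g) (IZR i) (IZR i + 1)) (image_on (rep k h) (IZR i) (IZR i + 1)).

Lemma Pfin_bound n x : (2 <= n)%nat -> r0 n <= x <= r1 n ->
  Rabs (Pfin n x) <= INR n ^ 2 * (INR n ^ 2) ^ (n - 1).
Proof.
  intros Hn Hx. rewrite Pfin_first.
  assert (Hw : r1 n - r0 n <= INR n) by (unfold r0, r1; lra).
  assert (Hp : 0 <= prodR (n - 1) (fun i => (x - pfin n i) ^ 2)) by (apply prodR_nonneg; intros; apply pow2_ge_0).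
  rewrite Rabs_mult, (Rabs_right (prodR _ _)) by lra.
  apply Rmult_le_compat; [apply Rabs_pos| auto| |].
  - rewrite Rabs_Ropp, Rabs_mult. assert (0 <= INR n) by apply pos_INR.
    assert (Rabs (x - r0 n) <= INR n) by (rewrite Rabs_right; lra).
    assert (Rabs (x - r1 n) <= INR n) by (rewrite Rabs_left1; lra).
    simpl. rewrite Rmult_1_r. apply Rmult_le_compat; auto; apply Rabs_pos.
  - apply prodR_le. intros i Hi. pose proof (pfin_range n i Hi). split; [apply pow2_ge_0|].
    rewrite <- (pow2_abs (x - pfin n i)). assert (Rabs (x - pfin n i) <= INR n) by (unfold Rabs; destruct Rcase_abs; lra).
    pose proof (Rabs_pos (x - pfin n i)). simpl; nra.
Qed.

Lemma step_inf r : Traj None r -> forall c, pseudo None (r c) -> forall s, 0 <= s <= 1 ->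
  Rabs (fst (r (c + s)) - fst (r c)) <= 1.
Proof.
  intros HT c [l Hl] s Hs. destruct (seg_inf r HT c l Hl) as [b Hb].
  rewrite Hb by auto. rewrite Hl. unfold SegI; simpl.
  replace (IZR l + dir b * s - IZR l) with (dir b * s) by ring.
  rewrite Rabs_mult. destruct b; simpl; rewrite ?Rabs_R1, ?Rabs_m1, Rabs_right; lra.
Qed.

Lemma lip_inf r : Traj None r -> pseudo None (r 0) -> forall i t, IZR i <= t <= IZR i + 1 ->
  Rabs (fst (r t) - fst (r 0)) <= INR (Z.abs_nat i) + 1.
Proof.
  intros HT H0.
  assert (Hps : forall z, pseudo None (r (IZR z))) by (intros z; rewrite <- (Rplus_0_l (IZR z)); apply pseudo_int; auto; exact I).
  assert (Hm : forall m : nat, Rabs (fst (r (INR m)) - fst (r 0)) <= INR m /\ Rabs (fst (r (- INR m)) - fst (r 0)) <= INR m).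
  { induction m.
    - simpl. rewrite Ropp_0, Rminus_diag, Rabs_R0. lra.
    - destruct IHm as [I1 I2]. rewrite S_INR. split.
      + pose proof (step_inf r HT (INR m) ltac:(rewrite INR_IZR_INZ; apply Hps) 1 ltac:(lra)).
        pose proof (Rabs_triang (fst (r (INR m + 1)) - fst (r (INR m))) (fst (r (INR m)) - fst (r 0))).
        replace (fst (r (INR m + 1)) - fst (r (INR m)) + (fst (r (INR m)) - fst (r 0))) with (fst (r (INR m + 1)) - fst (r 0)) in H1 by ring.
        lra.
      + assert (Hp : pseudo None (r (- (INR m + 1)))).
        { replace (- (INR m + 1)) with (IZR (- Z.of_nat (S m))) by (rewrite opp_IZR, <- INR_IZR_INZ, S_INR; ring). apply Hps. }
        pose proof (step_inf r HT _ Hp 1 ltac:(lra)).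
        replace (- (INR m + 1) + 1) with (- INR m) in H by ring.
        rewrite Rabs_minus_sym in H.
        pose proof (Rabs_triang (fst (r (- (INR m + 1))) - fst (r (- INR m))) (fst (r (- INR m)) - fst (r 0))).
        replace (fst (r (- (INR m + 1))) - fst (r (- INR m)) + (fst (r (- INR m)) - fst (r 0))) with (fst (r (- (INR m + 1))) - fst (r 0)) in H1 by ring.
        lra. }
  intros i t Ht.
  assert (Hi : Rabs (fst (r (IZR i)) - fst (r 0)) <= INR (Z.abs_nat i)).
  { destruct (Z_le_gt_dec 0 i).
    - replace (IZR i) with (INR (Z.abs_nat i)) by (rewrite INR_IZR_INZ; f_equal; lia). apply Hm.
    - replace (IZR i) with (- INR (Z.abs_nat i)) by (rewrite INR_IZR_INZ, <- opp_IZR; f_equal; lia). apply Hm. }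
  pose proof (step_inf r HT (IZR i) (Hps i) (t - IZR i) ltac:(lra)).
  replace (IZR i + (t - IZR i)) with t in H by ring.
  pose proof (Rabs_triang (fst (r t) - fst (r (IZR i))) (fst (r (IZR i)) - fst (r 0))).
  replace (fst (r t) - fst (r (IZR i)) + (fst (r (IZR i)) - fst (r 0))) with (fst (r t) - fst (r 0)) in H1 by ring.
  lra.
Qed.

Lemma D_bound k (hk : valid_k k) g h : Omega k g -> Omega k h ->
  exists K, 0 <= K /\ forall i, 0 <= Dt k g h i <= K + 2 * INR (Z.abs_nat i).
Proof.
  intros Og Oh.
  destruct (rep_spec k hk g Og) as [Og' [_ Pg]]. destruct (rep_spec k hk h Oh) as [Oh' [_ Ph]].
  pose proof (Omega_Traj k hk _ Og') as Tg. pose proof (Omega_Traj k hk _ Oh') as Th.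
  set (rg := rep k g) in *. set (rh := rep k h) in *.
  assert (Hne : forall r i, exists q, image_on r (IZR i) (IZR i + 1) q).
  { intros r i. exists (r (IZR i)). exists (IZR i). split; [lra|auto]. }
  destruct k as [n|].
  - simpl in hk. set (PB := INR n ^ 2 * (INR n ^ 2) ^ (n - 1)).
    assert (Hb : forall q, Lambda (Some n) q -> Rabs (fst q) <= r1 n /\ Rabs (snd q) <= PB).
    { intros q [Hx Hog]. split.
      - rewrite r0_eq in Hx. unfold Rabs; destruct Rcase_abs; lra.
      - pose proof (Pfin_bound n (fst q) hk Hx). destruct Hog as [E|E]; simpl in E; rewrite E;
        [|rewrite Rabs_Ropp]; auto. }
    assert (HPB : 0 <= PB) by (pose proof (Hb _ (proj1 Tg 0)) as [_ ?]; pose proof (Rabs_pos (snd (rg 0))); lra).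
    assert (Hr1 : 0 <= r1 n) by (pose proof (Hb _ (proj1 Tg 0)) as [? _]; pose proof (Rabs_pos (fst (rg 0))); lra).
    exists (2 * r1 n + 2 * PB). split; [lra|]. intros i.
    assert (0 <= INR (Z.abs_nat i)) by apply pos_INR.
    unfold Dt. fold rg rh.
    destruct (hausdorff_bounds (image_on rg (IZR i) (IZR i + 1)) (image_on rh (IZR i) (IZR i + 1)) (2 * r1 n + 2 * PB))
      as [D1 D2]; [apply Hne|apply Hne| |split; lra].
    intros a b [t [_ ->]] [t' [_ ->]]. eapply Rle_trans; [apply euclid_le|].
    destruct (Hb _ (proj1 Tg t)). destruct (Hb _ (proj1 Th t')).
    pose proof (Rabs_triang (fst (rg t)) (- fst (rh t'))). pose proof (Rabs_triang (snd (rg t)) (- snd (rh t'))).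
    rewrite Rabs_Ropp in H4, H5. unfold Rminus. lra.
  - assert (Hb : forall q, Lambda None q -> Rabs (snd q) <= 1).
    { intros q Hog. pose proof (Pinf_le1 (fst q)). pose proof (Pinf_nonneg (fst q)).
      destruct Hog as [E|E]; simpl in E; rewrite E; [|rewrite Rabs_Ropp]; rewrite Rabs_right; lra. }
    set (K := Rabs (fst (rg 0) - fst (rh 0)) + 4).
    exists K. split; [unfold K; pose proof (Rabs_pos (fst (rg 0) - fst (rh 0))); lra|]. intros i.
    unfold Dt. fold rg rh.
    destruct (hausdorff_bounds (image_on rg (IZR i) (IZR i + 1)) (image_on rh (IZR i) (IZR i + 1)) (K + 2 * INR (Z.abs_nat i)))
      as [D1 D2]; [apply Hne|apply Hne| |split; lra].
    intros a b [t [Ht ->]] [t' [Ht' ->]]. eapply Rle_trans; [apply euclid_le|].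
    pose proof (Hb _ (proj1 Tg t)). pose proof (Hb _ (proj1 Th t')).
    pose proof (lip_inf rg Tg Pg i t Ht). pose proof (lip_inf rh Th Ph i t' Ht').
    pose proof (Rabs_triang (fst (rg t) - fst (rg 0)) (fst (rg 0) - fst (rh t'))).
    pose proof (Rabs_triang (fst (rg 0) - fst (rh 0)) (fst (rh 0) - fst (rh t'))).
    rewrite (Rabs_minus_sym (fst (rh 0))) in H4.
    pose proof (Rabs_triang (snd (rg t)) (- snd (rh t'))). rewrite Rabs_Ropp in H5.
    replace (fst (rg t) - fst (rg 0) + (fst (rg 0) - fst (rh t'))) with (fst (rg t) - fst (rh t')) in H3 by ring.
    replace (fst (rg 0) - fst (rh 0) + (fst (rh 0) - fst (rh t'))) with (fst (rg 0) - fst (rh t')) in H4 by ring.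
    unfold K. unfold Rminus at 2. lra.
Qed.

Lemma image_T1 r i : image_on (T1 r) (IZR i) (IZR i + 1) = image_on r (IZR (Z.succ i)) (IZR (Z.succ i) + 1).
Proof.
  apply functional_extensionality; intros q. apply propositional_extensionality.
  unfold image_on, T1. rewrite succ_IZR. split.
  - intros [t [Ht ->]]. exists (t + 1). split; [lra|auto].
  - intros [t [Ht ->]]. exists (t - 1). split; [lra|]. f_equal; ring.
Qed.

Lemma rho_eq k g h : rho k g h = SZ (fun i => (/ 2) ^ (Z.abs_nat i) * Dt k g h i).
Proof. reflexivity. Qed.

Lemma rho_T1_eq k (hk : valid_k k) g h : Omega k g -> Omega k h ->
  rho k (T1 g) (T1 h) = SZ (fun i => (/ 2) ^ (Z.abs_nat i) * Dt k g h (Z.succ i)).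
Proof.
  intros Og Oh. transitivity (SZ (rho_term k (T1 g) (T1 h))); [reflexivity|]. f_equal.
  apply functional_extensionality; intros i. unfold rho_term, Dt.
  rewrite (rep_T1 k hk g Og), (rep_T1 k hk h Oh), !image_T1. reflexivity.
Qed.

Lemma SZ_ext a b : (forall i, a i = b i) -> SZ a = SZ b.
Proof. intros H. f_equal. apply functional_extensionality; auto. Qed.

Lemma half_pow a b : (b <= S a)%nat -> (/ 2) ^ a <= 2 * (/ 2) ^ b.
Proof.
  intros H. pose proof (pow_decr (/2) b (S a) ltac:(lra) H).
  rewrite <- tech_pow_Rmult in H0. lra.
Qed.

Theorem mainTheorem13 (k : option nat) (hk : valid_k k) :
  (* T1 maps Omega_k to itself *)
  (forall g, Omega k g -> Omega k (T1 g)) /\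
  (* well defined on classes *)
  (forall g1 g2, Omega k g1 -> Omega k g2 -> sim k g1 g2 -> sim k (T1 g1) (T1 g2)) /\
  (* injective on classes *)
  (forall g1 g2, Omega k g1 -> Omega k g2 -> sim k (T1 g1) (T1 g2) -> sim k g1 g2) /\
  (* surjective on classes *)
  (forall g, Omega k g -> exists h, Omega k h /\ sim k (T1 h) g) /\
  (* continuous w.r.t. rho_k *)
  (forall g eps, Omega k g -> 0 < eps -> exists delta, 0 < delta /\
     forall h, Omega k h -> rho k g h < delta -> rho k (T1 g) (T1 h) < eps) /\
  (* inverse continuous w.r.t. rho_k *)
  (forall g eps, Omega k g -> 0 < eps -> exists delta, 0 < delta /\
     forall h, Omega k h -> rho k (T1 g) (T1 h) < delta -> rho k g h < eps).
Proof.
  split; [|split; [|split; [|split; [|split]]]].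
  - apply Omega_T1; auto.
  - intros; apply sim_T1; auto.
  - intros; eapply sim_T1_inv; eauto.
  - intros g Og. exists (fun t => g (t + -1)). split; [apply Omega_shift; auto|].
    replace (T1 (fun t => g (t + -1))) with g; [apply sim_refl|].
    apply functional_extensionality; intros t. unfold T1. f_equal; ring.
  - intros g eps Og Heps. exists (eps / 2). split; [lra|]. intros h Oh Hr.
    destruct (D_bound k hk g h Og Oh) as [K [HK HD]].
    set (e := fun i => (/ 2) ^ (Z.abs_nat i) * Dt k g h i).
    assert (Ge : good e) by (apply (good_of_D _ K); auto).
    rewrite (rho_T1_eq k hk g h Og Oh).
    rewrite rho_eq in Hr. fold e in Hr.
    assert (SZ (fun i => (/ 2) ^ (Z.abs_nat i) * Dt k g h (Z.succ i)) <= SZ (fun i => 2 * e (Z.succ i))).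
    { apply SZ_le; [|apply good_scal; [lra| apply good_succ; auto]].
      intros i. destruct (HD (Z.succ i)) as [D1 D2]. pose proof (pow_le (/2) (Z.abs_nat i) ltac:(lra)).
      split; [nra|]. unfold e. rewrite <- Rmult_assoc. apply Rmult_le_compat_r; auto.
      apply half_pow; lia. }
    rewrite SZ_scal, SZ_shift in H by auto. lra.
  - intros g eps Og Heps. exists (eps / 2). split; [lra|]. intros h Oh Hr.
    destruct (D_bound k hk g h Og Oh) as [K [HK HD]].
    set (e' := fun i => (/ 2) ^ (Z.abs_nat i) * Dt k g h (Z.succ i)).
    assert (Ge' : good e').
    { apply (good_of_D _ (K + 2)); [lra|]. intros i. destruct (HD (Z.succ i)) as [D1 D2].
      split; auto. assert (INR (Z.abs_nat (Z.succ i)) <= INR (Z.abs_nat i) + 1) by (rewrite <- S_INR; apply le_INR; lia).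
      lra. }
    rewrite (rho_T1_eq k hk g h Og Oh) in Hr. fold e' in Hr.
    rewrite rho_eq.
    assert (SZ (fun i => (/ 2) ^ (Z.abs_nat i) * Dt k g h i) <= SZ (fun i => 2 * e' (Z.pred i))).
    { apply SZ_le; [|apply good_scal; [lra| apply good_pred; auto]].
      intros i. destruct (HD i) as [D1 D2]. pose proof (pow_le (/2) (Z.abs_nat i) ltac:(lra)).
      split; [nra|]. unfold e'. rewrite Z.succ_pred. rewrite <- Rmult_assoc. apply Rmult_le_compat_r; auto.
      apply half_pow; lia. }
    rewrite SZ_scal in H.
    assert (SZ (fun i => e' (Z.pred i)) = SZ e').
    { rewrite <- (SZ_shift (fun i => e' (Z.pred i))) by (apply good_pred; auto).
      apply SZ_ext; intros i; rewrite Z.pred_succ; auto. }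
    lra.
Qed.
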